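(* Let $R:\mathbb R^N\to\mathbb R\cup\{+\infty\}$ be a polyhedral function of the form $$R(x)=\max_{i=1,\dots,k}\{\langle a_i,x\rangle-\alpha_i\}+\iota_{\bigcap_{i=k+1}^m\{x:\langle a_i,x\rangle-\alpha_i\le0\}}(x),$$ with $1\le k\le m$, $a_i\in\mathbb R^N$, $\alpha_i\in\mathbb R$, and $\mathrm{dom}(R)\neq\emptyset$. For $x\in\mathrm{dom}(R)$ let $I^{\max}(x)=\{i\in\{1,\dots,k\}:\langle a_i,x\rangle-\alpha_i=R(x)\}$, $I^{\mathrm{feas}}(x)=\{i\in\{k+1,\dots,m\}:\langle a_i,x\rangle=\alpha_i\}$, and for $I\subset\{1,\dots,m\}$ set $M_I=\{x\in\mathrm{dom}(R):I^{\max}(x)\cup I^{\mathrm{feas}}(x)=I\}$ and $M_I^*=\mathrm{ri}(\mathrm{conv}\{a_i:i\in I\cap\{1,\dots,k\}\})+\mathrm{ri}(\mathrm{cone}\{a_i:i\in I\cap\{k+1,\dots,m\}\})$ (with $\mathrm{cone}\,\emptyset=\{0\}$). Then $\{M_I: M_I\neq\emptyset\}$ is a stratification of $\mathrm{dom}(R)$, $J_R(M_I)=M_I^*$ and $J_{R^*}(M_I^* )=M_I$ whenever $M_I\neq\emptyset$, and $R$ is mirror-stratifiable with respect to $\{M_I\}_{M_I\ne\emptyset}$ and $\{M_I^*\}_{M_I\ne\emptyset}$.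
   Context: $\iota_C$ denotes the indicator function of $C$ (0 on $C$, $+\infty$ outside); $\mathrm{ri}$ is the relative interior, $\mathrm{conv}$ the convex hull, $\mathrm{cone}$ the convex conic hull. A stratification of a set $D$ is a finite partition $\mathcal S$ of $D$ into nonempty sets called strata such that for any strata $M,M'$, $M\cap\mathrm{cl}(M')\neq\emptyset$ implies $M\subset\mathrm{cl}(M')$; ordered by $M\le M'$ iff $M\subset\mathrm{cl}(M')$. For a proper lsc convex $R$ with conjugate $R^*$, $J_R(S)=\bigcup_{x\in S}\mathrm{ri}(\partial R(x))$ and $J_{R^*}$ analogously. $R$ is mirror-stratifiable with respect to a stratification $\mathcal S$ of $\mathrm{dom}(\partial R)$ and a stratification $\mathcal S^*$ of $\mathrm{dom}(\partial R^* )$ if (i) $J_R$ maps $\mathcal S$ bijectively onto $\mathcal S^*$ with inverse $J_{R^*}$, i.e. for all $M\in\mathcal S$, $M^*\in\mathcal S^*$: $M^*=J_R(M)\iff J_{R^*}(M^* )=M$; and (ii) for all $M,M'\in\mathcal S$: $M\le M'\iff J_R(M)\ge J_R(M')$. *)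

(* Defs.v *)
From Stdlib Require Fin.
From Stdlib Require Import Reals List Classical ClassicalEpsilon.
Open Scope R_scope.

Definition vec (N : nat) := Fin.t N -> R.
Definition vset (N : nat) := vec N -> Prop.

Fixpoint dot (N : nat) : vec N -> vec N -> R :=
  match N return vec N -> vec N -> R with
  | O => fun _ _ => 0
  | S n => fun x y => x Fin.F1 * y Fin.F1
                      + dot n (fun i => x (Fin.FS i)) (fun i => y (Fin.FS i))
  end.
Arguments dot {N} _ _.

Definition vzero {N} : vec N := fun _ => 0.
Definition vadd {N} (x y : vec N) : vec N := fun i => x i + y i.
Definition vsub {N} (x y : vec N) : vec N := fun i => x i - y i.
Definition vscale {N} (c : R) (x : vec N) : vec N := fun i => c * x i.
Definition vnorm {N} (x : vec N) : R := sqrt (dot x x).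

Definition closure {N} (S : vset N) : vset N :=
  fun x => forall eps, 0 < eps -> exists y, S y /\ vnorm (vsub y x) < eps.

Definition sumR (l : list R) : R := fold_right Rplus 0 l.
Definition lincomb {N} (l : list (R * vec N)) : vec N :=
  fold_right (fun p acc => vadd (vscale (fst p) (snd p)) acc) vzero l.

Definition aff {N} (S : vset N) : vset N :=
  fun x => exists l : list (R * vec N),
    (forall p, In p l -> S (snd p)) /\ sumR (map fst l) = 1 /\ x = lincomb l.

Definition ri {N} (S : vset N) : vset N :=
  fun x => S x /\ exists eps, 0 < eps /\
    forall y, aff S y -> vnorm (vsub y x) < eps -> S y.

Definition msum {N} (A B : vset N) : vset N :=
  fun z => exists x y, A x /\ B y /\ z = vadd x y.

Definition lincomb_idx {N} (lam : nat -> R) (a : nat -> vec N) (l : list nat) : vec N :=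
  fold_right (fun i acc => vadd (vscale (lam i) (a i)) acc) vzero l.

Definition conv_fam {N} (P : nat -> Prop) (a : nat -> vec N) : vset N :=
  fun y => exists (l : list nat) (lam : nat -> R),
    (forall i, In i l -> P i) /\ (forall i, 0 <= lam i) /\
    sumR (map lam l) = 1 /\ y = lincomb_idx lam a l.

(** cone {a_i : P i} (convex conic hull; cone of the empty family is {0}) *)
Definition cone_fam {N} (P : nat -> Prop) (a : nat -> vec N) : vset N :=
  fun y => exists (l : list nat) (lam : nat -> R),
    (forall i, In i l -> P i) /\ (forall i, 0 <= lam i) /\
    y = lincomb_idx lam a l.

Inductive ereal := Fin (r : R) | PInf.

(** supremum in R ∪ {+oo} of a set of reals (+oo if unbounded;
    only used on nonempty sets) *)
Definition esup (P : R -> Prop) : ereal :=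
  match excluded_middle_informative (bound P /\ exists t, P t) with
  | left h => Fin (proj1_sig (completeness P (proj1 h) (proj2 h)))
  | right _ => PInf
  end.

Definition edom {N} (f : vec N -> ereal) : vset N := fun x => exists r, f x = Fin r.

Definition conjugate {N} (f : vec N -> ereal) : vec N -> ereal :=
  fun g => esup (fun t => exists x r, f x = Fin r /\ t = dot g x - r).

Definition subdiff {N} (f : vec N -> ereal) (x : vec N) : vset N :=
  fun g => exists fx, f x = Fin fx /\
    forall y fy, f y = Fin fy -> fx + dot g (vsub y x) <= fy.

Definition dom_subdiff {N} (f : vec N -> ereal) : vset N :=
  fun x => exists g, subdiff f x g.

Definition Jmap {N} (f : vec N -> ereal) (S : vset N) : vset N :=
  fun y => exists x, S x /\ ri (subdiff f x) y.

Definition stratification {N} (D : vset N) (S : vset N -> Prop) : Prop :=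
  (exists L : list (vset N), forall M, S M <-> In M L) /\
  (forall M, S M -> exists x, M x) /\
  (forall M, S M -> forall x, M x -> D x) /\
  (forall x, D x -> exists M, S M /\ M x) /\
  (forall M M', S M -> S M' -> M <> M' -> forall x, ~ (M x /\ M' x)) /\
  (forall M M', S M -> S M' ->
     (exists x, M x /\ closure M' x) -> forall x, M x -> closure M' x).

Definition strat_le {N} (M M' : vset N) : Prop := forall x, M x -> closure M' x.

Definition mirror_stratifiable {N} (f : vec N -> ereal)
    (S Sst : vset N -> Prop) : Prop :=
  stratification (dom_subdiff f) S /\
  stratification (dom_subdiff (conjugate f)) Sst /\
  (forall M, S M -> Sst (Jmap f M)) /\
  (forall Mst, Sst Mst -> S (Jmap (conjugate f) Mst)) /\
  (forall M Mst, S M -> Sst Mst ->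
     (Mst = Jmap f M <-> Jmap (conjugate f) Mst = M)) /\
  (forall M M', S M -> S M' ->
     (strat_le M M' <-> strat_le (Jmap f M') (Jmap f M))).

Fixpoint rmax_range (f : nat -> R) (k : nat) : R :=
  match k with
  | O => f 1%nat
  | S O => f 1%nat
  | S k' => Rmax (rmax_range f k') (f k)
  end.

Definition poly_feas {N} (k m : nat) (a : nat -> vec N) (alpha : nat -> R)
    (x : vec N) : Prop :=
  forall i, (k + 1 <= i <= m)%nat -> dot (a i) x - alpha i <= 0.

Definition polyR {N} (k m : nat) (a : nat -> vec N) (alpha : nat -> R)
    (x : vec N) : ereal :=
  match excluded_middle_informative (poly_feas k m a alpha x) with
  | left _ => Fin (rmax_range (fun i => dot (a i) x - alpha i) k)
  | right _ => PInf
  end.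

Definition Imax {N} k m (a : nat -> vec N) alpha (x : vec N) (i : nat) : Prop :=
  (1 <= i <= k)%nat /\ polyR k m a alpha x = Fin (dot (a i) x - alpha i).

Definition Ifeas {N} (k m : nat) (a : nat -> vec N) (alpha : nat -> R)
    (x : vec N) (i : nat) : Prop :=
  (k + 1 <= i <= m)%nat /\ dot (a i) x = alpha i.

Definition M_I {N} k m (a : nat -> vec N) alpha (I : nat -> Prop) : vset N :=
  fun x => edom (polyR k m a alpha) x /\
    forall i, I i <-> (Imax k m a alpha x i \/ Ifeas k m a alpha x i).

Definition Mst_I {N} (k m : nat) (a : nat -> vec N) (I : nat -> Prop) : vset N :=
  msum (ri (conv_fam (fun i => I i /\ (1 <= i <= k)%nat) a))
       (ri (cone_fam (fun i => I i /\ (k + 1 <= i <= m)%nat) a)).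

(* Main.v *)
Require Import Defs.
From Stdlib Require Import Reals List Lra Lia FunctionalExtensionality PropExtensionality Classical ClassicalEpsilon.
Open Scope R_scope.

Lemma vec_ext {N} (x y : vec N) : (forall i, x i = y i) -> x = y.
Proof. intros; apply functional_extensionality; auto. Qed.

Lemma dot_S n (x y : vec (S n)) :
  dot x y = x Fin.F1 * y Fin.F1 + dot (fun i => x (Fin.FS i)) (fun i => y (Fin.FS i)).
Proof. reflexivity. Qed.

Lemma dot_comm {N} (x y : vec N) : dot x y = dot y x.
Proof. induction N; simpl; [lra|]. rewrite IHN; lra. Qed.

Lemma dot_addl {N} (x y z : vec N) : dot (vadd x y) z = dot x z + dot y z.
Proof. induction N; simpl; [lra|].
  specialize (IHN (fun i => x (Fin.FS i)) (fun i => y (Fin.FS i)) (fun i => z (Fin.FS i))).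
  unfold vadd in *. rewrite IHN. lra. Qed.

Lemma dot_scalel {N} c (x z : vec N) : dot (vscale c x) z = c * dot x z.
Proof. induction N; simpl; [lra|].
  specialize (IHN (fun i => x (Fin.FS i)) (fun i => z (Fin.FS i))).
  unfold vscale in *. rewrite IHN. lra. Qed.

Lemma dot_subl {N} (x y z : vec N) : dot (vsub x y) z = dot x z - dot y z.
Proof. induction N; simpl; [lra|].
  specialize (IHN (fun i => x (Fin.FS i)) (fun i => y (Fin.FS i)) (fun i => z (Fin.FS i))).
  unfold vsub in *. rewrite IHN. lra. Qed.

Lemma dot_zerol {N} (z : vec N) : dot vzero z = 0.
Proof. induction N; simpl; [lra|].
  specialize (IHN (fun i => z (Fin.FS i))). unfold vzero in *. rewrite IHN. lra. Qed.

Lemma dot_addr {N} (x y z : vec N) : dot z (vadd x y) = dot z x + dot z y.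
Proof. rewrite !(dot_comm z). apply dot_addl. Qed.
Lemma dot_scaler {N} c (x z : vec N) : dot z (vscale c x) = c * dot z x.
Proof. rewrite !(dot_comm z). apply dot_scalel. Qed.
Lemma dot_subr {N} (x y z : vec N) : dot z (vsub x y) = dot z x - dot z y.
Proof. rewrite !(dot_comm z). apply dot_subl. Qed.
Lemma dot_zeror {N} (z : vec N) : dot z vzero = 0.
Proof. rewrite dot_comm. apply dot_zerol. Qed.

Lemma dot_pos {N} (x : vec N) : 0 <= dot x x.
Proof. induction N; simpl; [lra|].
  specialize (IHN (fun i => x (Fin.FS i))). nra. Qed.

Lemma dot_zero_coord {N} (x : vec N) : dot x x = 0 -> forall i, x i = 0.
Proof. induction N; intros H i.
  - inversion i.
  - simpl in H. pose proof (dot_pos (fun i => x (Fin.FS i))).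
    assert (x Fin.F1 = 0) by nra.
    assert (dot (fun i => x (Fin.FS i)) (fun i => x (Fin.FS i)) = 0) by nra.
    pattern i; apply (Fin.caseS' i); auto.
    intro q. apply (IHN (fun i => x (Fin.FS i))); auto. Qed.

Lemma dot_zero_vec {N} (x : vec N) : dot x x = 0 -> x = vzero.
Proof. intro H; apply vec_ext; intro i; apply dot_zero_coord; auto. Qed.

Lemma dot_pos_strict {N} (x : vec N) : x <> vzero -> 0 < dot x x.
Proof. intro H. destruct (dot_pos x) as [h|h]; auto.
  exfalso; apply H, dot_zero_vec; auto. Qed.

Lemma cauchy_schwarz {N} (x y : vec N) : (dot x y)^2 <= dot x x * dot y y.
Proof.
  destruct (Req_dec (dot y y) 0) as [h|h].
  - apply dot_zero_vec in h. subst y. rewrite dot_zeror, dot_zerol. nra.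
  - pose proof (dot_pos y).
    set (s := dot x y / dot y y).
    pose proof (dot_pos (vsub x (vscale s y))).
    rewrite dot_subl, !dot_subr, !dot_scalel, !dot_scaler in H0.
    rewrite (dot_comm y x) in H0.
    unfold s in H0. field_simplify in H0; [|lra].
    assert (0 < dot y y) by lra.
    apply Rmult_le_compat_r with (r := dot y y) in H0; [|lra].
    field_simplify in H0; [|lra]. nra.
Qed.

Lemma vnorm_pos {N} (x : vec N) : 0 <= vnorm x.
Proof. apply sqrt_pos. Qed.

Lemma vnorm_sq {N} (x : vec N) : vnorm x * vnorm x = dot x x.
Proof. apply sqrt_sqrt, dot_pos. Qed.

Lemma cs_abs {N} (x y : vec N) : Rabs (dot x y) <= vnorm x * vnorm y.
Proof.
  pose proof (cauchy_schwarz x y).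
  pose proof (vnorm_sq x). pose proof (vnorm_sq y).
  pose proof (vnorm_pos x). pose proof (vnorm_pos y).
  apply Rle_trans with (Rabs (vnorm x * vnorm y)).
  - apply Rsqr_le_abs_0. unfold Rsqr. simpl in H. nra.
  - rewrite Rabs_right by nra. lra.
Qed.

Lemma dot_le_norm {N} (x y : vec N) : dot x y <= vnorm x * vnorm y.
Proof. pose proof (cs_abs x y). pose proof (Rle_abs (dot x y)). lra. Qed.

Lemma vnorm_triangle {N} (x y : vec N) : vnorm (vadd x y) <= vnorm x + vnorm y.
Proof.
  pose proof (vnorm_sq (vadd x y)). rewrite dot_addl, !dot_addr in H.
  rewrite (dot_comm y x) in H.
  pose proof (vnorm_sq x). pose proof (vnorm_sq y). pose proof (dot_le_norm x y).
  pose proof (vnorm_pos x). pose proof (vnorm_pos y). pose proof (vnorm_pos (vadd x y)).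
  nra.
Qed.

Lemma vnorm_scale {N} c (x : vec N) : vnorm (vscale c x) = Rabs c * vnorm x.
Proof.
  unfold vnorm. rewrite dot_scalel, dot_scaler.
  replace (c * (c * dot x x)) with (Rsqr c * dot x x) by (unfold Rsqr; ring).
  rewrite sqrt_mult by (auto using Rle_0_sqr, dot_pos).
  rewrite sqrt_Rsqr_abs. auto.
Qed.

Lemma vnorm_zero_iff {N} (x : vec N) : vnorm x = 0 -> x = vzero.
Proof. intro h. apply dot_zero_vec. rewrite <- vnorm_sq, h. ring. Qed.

Lemma dot_small {N} (a v : vec N) eps : vnorm v < eps -> Rabs (dot a v) <= vnorm a * eps.
Proof. intro h. pose proof (cs_abs a v). pose proof (vnorm_pos a).
  assert (vnorm a * vnorm v <= vnorm a * eps) by (apply Rmult_le_compat_l; lra). lra. Qed.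

Definition wsum (lam F : nat -> R) (L : list nat) : R := sumR (map (fun i => lam i * F i) L).

Lemma sumR_app l1 l2 : sumR (l1 ++ l2) = sumR l1 + sumR l2.
Proof. induction l1; simpl; lra. Qed.

Lemma sumR_map_ext {A} (f g : A -> R) (L : list A) :
  (forall i, In i L -> f i = g i) -> sumR (map f L) = sumR (map g L).
Proof. induction L; simpl; intros; auto. rewrite H, IHL; auto. Qed.

Lemma sumR_map_le {A} (f g : A -> R) (L : list A) :
  (forall i, In i L -> f i <= g i) -> sumR (map f L) <= sumR (map g L).
Proof. induction L; simpl; intros; [lra|]. pose proof (H a (or_introl eq_refl)).
  pose proof (IHL (fun i h => H i (or_intror h))). lra. Qed.

Lemma sumR_map_lt {A} (f g : A -> R) (L : list A) :
  (forall i, In i L -> f i <= g i) -> (exists i, In i L /\ f i < g i) ->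
  sumR (map f L) < sumR (map g L).
Proof. induction L; simpl; intros H [i [hi hlt]]; [contradiction|].
  destruct hi as [<-|hi].
  - pose proof (sumR_map_le f g L (fun i h => H i (or_intror h))). lra.
  - pose proof (H a (or_introl eq_refl)).
    assert (sumR (map f L) < sumR (map g L)) by (apply IHL; eauto). lra. Qed.

Lemma sumR_map_add {A} (f g : A -> R) (L : list A) :
  sumR (map (fun i => f i + g i) L) = sumR (map f L) + sumR (map g L).
Proof. induction L; simpl; lra. Qed.

Lemma sumR_map_scal {A} c (f : A -> R) (L : list A) :
  sumR (map (fun i => c * f i) L) = c * sumR (map f L).
Proof. induction L; simpl; lra. Qed.

Lemma sumR_map_zero {A} (L : list A) : sumR (map (fun _ => 0) L) = 0.
Proof. induction L; simpl; lra. Qed.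

Lemma sumR_map_nonneg {A} (f : A -> R) L : (forall i, In i L -> 0 <= f i) -> 0 <= sumR (map f L).
Proof. intro. rewrite <- (sumR_map_zero L). apply sumR_map_le. auto. Qed.

Lemma sumR_map_const {A} c (L : list A) : sumR (map (fun _ => c) L) = c * INR (length L).
Proof. induction L; simpl length; simpl map; simpl sumR.
  - simpl; ring. - rewrite IHL, S_INR. ring. Qed.

Lemma sumR_map_single (f : nat -> R) L i0 : NoDup L -> In i0 L ->
  sumR (map (fun i => if Nat.eq_dec i i0 then f i else 0) L) = f i0.
Proof. induction L; simpl; intros hnd hin; [contradiction|]. inversion hnd; subst.
  destruct (Nat.eq_dec a i0).
  - subst. rewrite (sumR_map_ext _ (fun _ => 0)). rewrite sumR_map_zero; ring.
    intros i hi. destruct (Nat.eq_dec i i0); auto. subst; contradiction.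
  - destruct hin; [congruence|]. rewrite IHL; auto. ring. Qed.

Lemma lincomb_coord {N} lam (a : nat -> vec N) L j :
  lincomb_idx lam a L j = wsum lam (fun i => a i j) L.
Proof. induction L; simpl; unfold wsum in *; simpl; auto.
  unfold vadd, vscale. rewrite <- IHL. reflexivity. Qed.

Lemma lincomb_dot {N} lam (a : nat -> vec N) L d :
  dot (lincomb_idx lam a L) d = wsum lam (fun i => dot (a i) d) L.
Proof. induction L; unfold wsum in *; simpl.
  - apply dot_zerol.
  - rewrite dot_addl, dot_scalel, IHL. reflexivity. Qed.

Lemma lincomb_ext {N} lam lam' (a : nat -> vec N) L :
  (forall i, In i L -> lam i = lam' i) -> lincomb_idx lam a L = lincomb_idx lam' a L.
Proof. intro H. apply vec_ext; intro j. rewrite !lincomb_coord. unfold wsum.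
  apply sumR_map_ext. intros; rewrite H; auto. Qed.

Lemma lincomb_ext_fam {N} lam (a a' : nat -> vec N) L :
  (forall i, In i L -> a i = a' i) -> lincomb_idx lam a L = lincomb_idx lam a' L.
Proof. intro H. apply vec_ext; intro j. rewrite !lincomb_coord. unfold wsum.
  apply sumR_map_ext. intros; rewrite H; auto. Qed.

Lemma wsum_ext lam lam' F F' L : (forall i, In i L -> lam i * F i = lam' i * F' i) ->
  wsum lam F L = wsum lam' F' L.
Proof. intro; unfold wsum; apply sumR_map_ext; auto. Qed.

Lemma wsum_app lam F L1 L2 : wsum lam F (L1 ++ L2) = wsum lam F L1 + wsum lam F L2.
Proof. unfold wsum; rewrite map_app, sumR_app; auto. Qed.

Lemma lincomb_app {N} lam (a : nat -> vec N) L1 L2 :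
  lincomb_idx lam a (L1 ++ L2) = vadd (lincomb_idx lam a L1) (lincomb_idx lam a L2).
Proof. apply vec_ext; intro j. unfold vadd. rewrite !lincomb_coord. apply wsum_app. Qed.

Definition inb (P : Prop) : bool := if excluded_middle_informative P then true else false.
Lemma inb_true P : inb P = true <-> P.
Proof. unfold inb; destruct excluded_middle_informative; split; auto; congruence. Qed.

Definition sel (I : nat -> Prop) (lo len : nat) : list nat := filter (fun i => inb (I i)) (seq lo len).
Lemma sel_In I lo len i : In i (sel I lo len) <-> I i /\ (lo <= i < lo + len)%nat.
Proof. unfold sel. rewrite filter_In, in_seq, inb_true. tauto. Qed.
Lemma sel_NoDup I lo len : NoDup (sel I lo len).
Proof. unfold sel. apply NoDup_filter, seq_NoDup. Qed.

Lemma small_t_list {A} (L : list A) (P : A -> R -> Prop) :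
  (forall i, In i L -> exists d, 0 < d /\ forall t, 0 < t < d -> P i t) ->
  exists d, 0 < d /\ forall t, 0 < t < d -> forall i, In i L -> P i t.
Proof. induction L; intros H.
  - exists 1; split; [lra|]; intros; contradiction.
  - destruct IHL as [d1 [hd1 H1]]; [intros; apply H; simpl; auto|].
    destruct (H a (or_introl eq_refl)) as [d2 [hd2 H2]].
    exists (Rmin d1 d2); split; [apply Rmin_pos; auto|].
    intros t ht i [<-|hi].
    + apply H2. pose proof (Rmin_r d1 d2). lra.
    + apply H1; auto. pose proof (Rmin_l d1 d2). lra. Qed.

Lemma small_lt (A B : R) : A < 0 -> exists d, 0 < d /\ forall t, 0 < t < d -> A + t * B < 0.
Proof. intro h. destruct (Rle_dec B 0).
  - exists 1; split; [lra|]. intros; nra.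
  - exists (- A / B). split. apply Rdiv_lt_0_compat; lra.
    intros t [h1 h2]. apply Rmult_lt_compat_r with (r := B) in h2; [|lra].
    unfold Rdiv in h2. rewrite Rmult_assoc, Rinv_l in h2 by lra. lra. Qed.

Lemma wsum_lin lam F G c L : wsum lam (fun i => F i - c * G i) L = wsum lam F L - c * wsum lam G L.
Proof. unfold wsum. induction L; simpl; [ring|]. rewrite IHL. ring. Qed.

Lemma lincomb_nil {N} lam (a : nat -> vec N) : lincomb_idx lam a nil = vzero.
Proof. reflexivity. Qed.

Lemma farkas {N} (L : list nat) : NoDup L -> forall (b : nat -> vec N) (g : vec N),
 (exists lam, (forall i, 0 <= lam i) /\ g = lincomb_idx lam b L) \/
 (exists d, (forall i, In i L -> dot (b i) d <= 0) /\ 0 < dot g d).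
Proof.
  induction L as [|i0 L IH]; intros hnd b g.
  - destruct (classic (g = vzero)) as [h|h].
    + left. exists (fun _ => 0). split; [intros; lra|]. rewrite h. reflexivity.
    + right. exists g. split; [intros; contradiction|]. apply dot_pos_strict; auto.
  - inversion hnd as [|? ? hni hnd']; subst.
    destruct (IH hnd' b g) as [[lam [hl hg]]|[d [hd hgd]]].
    + left. exists (fun i => if Nat.eq_dec i i0 then 0 else lam i). split.
      * intros i; destruct Nat.eq_dec; auto; lra.
      * simpl. destruct Nat.eq_dec; [|congruence].
        rewrite (lincomb_ext _ lam). rewrite <- hg. apply vec_ext; intro j; unfold vadd, vscale; ring.
        intros i hi. destruct Nat.eq_dec; auto. subst; contradiction.
    + destruct (Rle_dec (dot (b i0) d) 0) as [hb|hb].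
      * right. exists d. split; auto. intros i [<-|hi]; auto.
      * set (beta := dot (b i0) d).
        assert (hbeta : 0 < beta) by (unfold beta; lra).
        set (b' := fun i => vsub (b i) (vscale (dot (b i) d / beta) (b i0))).
        set (g' := vsub g (vscale (dot g d / beta) (b i0))).
        destruct (IH hnd' b' g') as [[lam [hl hg]]|[d' [hd' hgd']]].
        -- left. set (coef := (dot g d - wsum lam (fun i => dot (b i) d) L) / beta).
           assert (hcoef : 0 <= coef).
           { unfold coef. apply Rmult_le_pos; [|left; apply Rinv_0_lt_compat; auto].
             assert (wsum lam (fun i => dot (b i) d) L <= 0).
             { unfold wsum. rewrite <- (sumR_map_zero L). apply sumR_map_le.
               intros i hi. specialize (hd i hi). specialize (hl i). nra. }
             lra. }
           exists (fun i => if Nat.eq_dec i i0 then coef else lam i). split.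
           ++ intro i; destruct Nat.eq_dec; auto.
           ++ simpl. destruct Nat.eq_dec; [|congruence].
              rewrite (lincomb_ext _ lam).
              2:{ intros i hi. destruct Nat.eq_dec; auto. subst; contradiction. }
              apply vec_ext; intro j.
              assert (hj : g' j = lincomb_idx lam b' L j) by (rewrite hg; auto).
              unfold g', vsub, vscale in hj. rewrite lincomb_coord in hj.
              unfold b' in hj. unfold vsub, vscale in hj.
              rewrite (wsum_ext lam lam _ (fun i => b i j - (b i0 j / beta) * dot (b i) d)) in hj
                by (intros; f_equal; field; lra).
              rewrite wsum_lin in hj.
              unfold vadd, vscale. rewrite lincomb_coord. unfold coef.
              set (W1 := wsum lam (fun i : nat => dot (b i) d) L) in *.
              set (W2 := wsum lam (fun i : nat => b i j) L) in *.
              assert (g j = W2 - b i0 j / beta * W1 + dot g d / beta * b i0 j) as -> by lra.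
              field. lra.
        -- right. exists (vsub d' (vscale (dot (b i0) d' / beta) d)). split.
           ++ intros i [<-|hi].
              ** rewrite dot_subr, dot_scaler. fold beta. field_simplify; lra.
              ** specialize (hd' i hi). unfold b' in hd'.
                 rewrite dot_subl, dot_scalel in hd'.
                 rewrite dot_subr, dot_scaler. 
                 replace (dot (b i0) d' / beta * dot (b i) d) with (dot (b i) d / beta * dot (b i0) d') by (field; lra).
                 lra.
           ++ unfold g' in hgd'. rewrite dot_subl, dot_scalel in hgd'.
              rewrite dot_subr, dot_scaler.
              replace (dot (b i0) d' / beta * dot g d) with (dot g d / beta * dot (b i0) d') by (field; lra).
              lra.
Qed.

Lemma lincomb_map {N} lam (a : nat -> vec N) f L :
  lincomb_idx lam a (map f L) = lincomb_idx (fun i => lam (f i)) (fun i => a (f i)) L.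
Proof. induction L; simpl; auto. rewrite IHL; auto. Qed.


Lemma NoDup_map_inj (f : nat -> nat) L : (forall x y, f x = f y -> x = y) -> NoDup L -> NoDup (map f L).
Proof. intros hf hnd. induction hnd; simpl; constructor; auto.
  rewrite in_map_iff. intros [y [hy hy']]. apply hf in hy; subst; contradiction. Qed.

Lemma NoDup_app_disj (L1 L2 : list nat) : NoDup L1 -> NoDup L2 -> (forall i, In i L1 -> ~ In i L2) -> NoDup (L1 ++ L2).
Proof. induction 1 as [|x l hx hl IH]; simpl; intros h2 hd; [auto|]. constructor.
  - rewrite in_app_iff. intros [h|h]; [contradiction|]. apply (hd x); simpl; auto.
  - apply IH; [auto|]. intros; apply hd; simpl; auto. Qed.

Definition vopp {N} (x : vec N) : vec N := vscale (-1) x.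

Definition enc3 {N} (b bf : nat -> vec N) (n : nat) : vec N :=
  if Nat.eq_dec (n mod 3) 0 then b (n / 3)%nat
  else if Nat.eq_dec (n mod 3) 1 then bf (n / 3)%nat else vopp (bf (n / 3)%nat).

Lemma div3 i r : (r < 3)%nat -> ((3 * i + r) / 3 = i /\ (3 * i + r) mod 3 = r)%nat.
Proof. intros. split.
  - rewrite Nat.mul_comm, Nat.div_add_l by lia. rewrite Nat.div_small by lia. lia.
  - rewrite Nat.mul_comm, Nat.add_comm, Nat.Div0.mod_add. apply Nat.mod_small; lia. Qed.

Lemma enc3_0 {N} (b bf : nat -> vec N) i : enc3 b bf (3 * i) = b i.
Proof. unfold enc3. destruct (div3 i 0) as [h1 h2]; [lia|]. rewrite Nat.add_0_r in *.
  rewrite h1, h2. reflexivity. Qed.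
Lemma enc3_1 {N} (b bf : nat -> vec N) i : enc3 b bf (3 * i + 1) = bf i.
Proof. unfold enc3. destruct (div3 i 1) as [h1 h2]; [lia|]. rewrite h1, h2. reflexivity. Qed.
Lemma enc3_2 {N} (b bf : nat -> vec N) i : enc3 b bf (3 * i + 2) = vopp (bf i).
Proof. unfold enc3. destruct (div3 i 2) as [h1 h2]; [lia|]. rewrite h1, h2. reflexivity. Qed.

Lemma farkas2 {N} (L Lf : list nat) (b bf : nat -> vec N) (g : vec N) : NoDup L -> NoDup Lf ->
 (exists lam nu, (forall i, 0 <= lam i) /\ g = vadd (lincomb_idx lam b L) (lincomb_idx nu bf Lf)) \/
 (exists d, (forall i, In i L -> dot (b i) d <= 0) /\ (forall i, In i Lf -> dot (bf i) d = 0) /\ 0 < dot g d).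
Proof.
  intros h1 h2.
  set (LL := map (fun i => 3 * i)%nat L ++ map (fun i => 3 * i + 1)%nat Lf ++ map (fun i => 3 * i + 2)%nat Lf).
  assert (hnd : NoDup LL).
  { unfold LL. apply NoDup_app_disj; [|apply NoDup_app_disj|].
    - apply NoDup_map_inj; auto; intros; lia.
    - apply NoDup_map_inj; auto; intros; lia.
    - apply NoDup_map_inj; auto; intros; lia.
    - intros i hi hi'. rewrite in_map_iff in *. destruct hi as [x [<- _]], hi' as [y [hy _]]; lia.
    - intros i hi hi'. rewrite in_app_iff, !in_map_iff in *.
      destruct hi as [x [<- _]]. destruct hi' as [[y [hy _]]|[y [hy _]]]; lia. }
  destruct (farkas LL hnd (enc3 b bf) g) as [[lam [hl hg]]|[d [hd hgd]]].
  - left. exists (fun i => lam (3 * i)%nat), (fun i => lam (3 * i + 1)%nat - lam (3 * i + 2)%nat).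
    split; auto. rewrite hg. unfold LL. rewrite !lincomb_app, !lincomb_map.
    rewrite (lincomb_ext_fam _ (fun i => enc3 b bf (3 * i)) b) by (intros; apply enc3_0).
    rewrite (lincomb_ext_fam _ (fun i => enc3 b bf (3 * i + 1)) bf) by (intros; apply enc3_1).
    rewrite (lincomb_ext_fam _ (fun i => enc3 b bf (3 * i + 2)) (fun i => vopp (bf i))) by (intros; apply enc3_2).
    apply vec_ext; intro j. unfold vadd. rewrite !lincomb_coord. unfold vopp, vscale, wsum.
    f_equal. rewrite <- sumR_map_add. apply sumR_map_ext. intros; ring.
  - right. exists d. unfold LL in hd. split; [|split]; auto.
    + intros i hi. rewrite <- (enc3_0 b bf). apply hd. apply in_app_iff; left. apply (in_map (fun i => (3 * i)%nat)); auto.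
    + intros i hi. 
      assert (dot (enc3 b bf (3 * i + 1)) d <= 0) by (apply hd; rewrite !in_app_iff; right; left; apply (in_map (fun i => (3 * i + _)%nat)); auto).
      assert (dot (enc3 b bf (3 * i + 2)) d <= 0) by (apply hd; rewrite !in_app_iff; right; right; apply (in_map (fun i => (3 * i + _)%nat)); auto).
      rewrite enc3_1 in H. rewrite enc3_2 in H0. unfold vopp in H0. rewrite dot_scalel in H0. lra.
Qed.

(* homogenization *)
Definition ext {N} (x : vec N) (s : R) : vec (S N) := fun i => Fin.caseS' i (fun _ => R) s x.
Lemma dot_ext {N} (x : vec N) s (d : vec (S N)) : dot (ext x s) d = s * d Fin.F1 + dot x (fun j => d (Fin.FS j)).
Proof. reflexivity. Qed.

Lemma ext_eq {N} (x y : vec N) s t : ext x s = ext y t -> x = y /\ s = t.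
Proof. intro h. split.
  - apply vec_ext; intro j. exact (f_equal (fun v => v (Fin.FS j)) h).
  - exact (f_equal (fun v => v Fin.F1) h). Qed.

Lemma lincomb_ext_coords {N} lam (a : nat -> vec N) (e : nat -> R) L :
  lincomb_idx lam (fun i => ext (a i) (e i)) L = ext (lincomb_idx lam a L) (wsum lam e L).
Proof. induction L; simpl.
  - apply vec_ext; intro i. pattern i; apply (Fin.caseS' i); reflexivity.
  - rewrite IHL. apply vec_ext; intro i. pattern i; apply (Fin.caseS' i); reflexivity. Qed.

Definition Comb {N} (L1 L2 : list nat) (u v : nat -> vec N) : vset N :=
  fun z => exists lam mu, (forall i, 0 <= lam i) /\ (forall i, 0 <= mu i) /\
    sumR (map lam L1) = 1 /\ z = vadd (lincomb_idx lam u L1) (lincomb_idx mu v L2).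

Definition SComb {N} (L1 L2 : list nat) (u v : nat -> vec N) : vset N :=
  fun z => exists lam mu, (forall i, 0 <= lam i) /\ (forall i, 0 <= mu i) /\
    (forall i, In i L1 -> 0 < lam i) /\ (forall i, In i L2 -> 0 < mu i) /\
    sumR (map lam L1) = 1 /\ z = vadd (lincomb_idx lam u L1) (lincomb_idx mu v L2).

Lemma SComb_Comb {N} L1 L2 (u v : nat -> vec N) z : SComb L1 L2 u v z -> Comb L1 L2 u v z.
Proof. intros (lam & mu & h1 & h2 & _ & _ & h3 & h4). exists lam, mu; auto. Qed.

Definition hfam {N} (L1 : list nat) (u v : nat -> vec N) (i : nat) : vec (S N) :=
  if inb (In i L1) then ext (u i) 1 else ext (v i) 0.

Lemma hfam_L1 {N} L1 (u v : nat -> vec N) i : In i L1 -> hfam L1 u v i = ext (u i) 1.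
Proof. intro h. unfold hfam. destruct (inb (In i L1)) eqn:e; auto. exfalso.
  unfold inb in e; destruct excluded_middle_informative; congruence. Qed.
Lemma hfam_L2 {N} L1 (u v : nat -> vec N) i : ~ In i L1 -> hfam L1 u v i = ext (v i) 0.
Proof. intro h. unfold hfam. destruct (inb (In i L1)) eqn:e; auto. exfalso.
  apply h. apply inb_true; auto. Qed.

Lemma lincomb_hfam {N} L1 L2 (u v : nat -> vec N) lam :
  (forall i, In i L1 -> ~ In i L2) ->
  lincomb_idx lam (hfam L1 u v) (L1 ++ L2) =
  ext (vadd (lincomb_idx lam u L1) (lincomb_idx lam v L2)) (sumR (map lam L1)).
Proof. intro hd. rewrite lincomb_app.
  rewrite (lincomb_ext_fam _ _ (fun i => ext (u i) 1) L1) by (intros; apply hfam_L1; auto).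
  rewrite (lincomb_ext_fam _ _ (fun i => ext (v i) 0) L2).
  2:{ intros i hi. apply hfam_L2. intro h; apply (hd i); auto. }
  rewrite (lincomb_ext_coords _ u (fun _ => 1)), (lincomb_ext_coords _ v (fun _ => 0)).
  apply vec_ext; intro i. pattern i; apply (Fin.caseS' i).
  - change (wsum lam (fun _ : nat => 1) L1 + wsum lam (fun _ : nat => 0) L2 = sumR (map lam L1)).
    unfold wsum. rewrite (sumR_map_ext (fun i => lam i * 0) (fun i => 0)) by (intros; ring).
    rewrite sumR_map_zero. rewrite (sumR_map_ext _ lam) by (intros; ring). ring.
  - reflexivity. Qed.

Lemma farkas_aff {N} (L1 L2 : list nat) (a : nat -> vec N) g :
  NoDup L1 -> NoDup L2 -> (forall i, In i L1 -> ~ In i L2) ->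
  Comb L1 L2 a a g \/
  exists d, (forall i, In i L1 -> dot (a i) d < dot g d) /\ (forall i, In i L2 -> dot (a i) d <= 0).
Proof.
  intros h1 h2 hd.
  destruct (farkas (L1 ++ L2) (NoDup_app_disj _ _ h1 h2 hd) (hfam L1 a a) (ext g 1))
    as [[lam [hl hg]]|[dh [hdh hg]]].
  - left. rewrite lincomb_hfam in hg by auto. apply ext_eq in hg as [hg1 hg2].
    exists lam, lam; repeat split; auto.
  - right. exists (fun j => dh (Fin.FS j)). rewrite dot_ext in hg. split.
    + intros i hi. specialize (hdh i (in_or_app _ _ _ (or_introl hi))).
      rewrite hfam_L1, dot_ext in hdh by auto. lra.
    + intros i hi. specialize (hdh i (in_or_app _ _ _ (or_intror hi))).
      rewrite hfam_L2, dot_ext in hdh by (intro h; apply (hd i); auto). lra.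
Qed.

Lemma farkas_span {N} (L : list nat) (b : nat -> vec N) g : NoDup L ->
  ~ (exists nu, g = lincomb_idx nu b L) ->
  exists d, (forall i, In i L -> dot (b i) d = 0) /\ 0 < dot g d.
Proof. intros hnd hn.
  destruct (farkas2 nil L b b g (NoDup_nil _) hnd) as [[lam [nu [_ hg]]]|[d [_ [h1 h2]]]].
  - exfalso; apply hn. exists nu. rewrite hg. apply vec_ext; intro; unfold vadd; simpl; unfold vzero; ring.
  - eauto. Qed.

Lemma lincomb_lin {N} (f g : nat -> R) c (a : nat -> vec N) L :
  lincomb_idx (fun i => c * f i + g i) a L = vadd (vscale c (lincomb_idx f a L)) (lincomb_idx g a L).
Proof. apply vec_ext; intro j. unfold vadd, vscale. rewrite !lincomb_coord. unfold wsum.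
  rewrite <- sumR_map_scal, <- sumR_map_add. apply sumR_map_ext; intros; ring. Qed.

Lemma bounded_coords {N} (L : list nat) (b : nat -> vec N) : NoDup L ->
  exists K, 0 <= K /\ forall w, (exists nu, w = lincomb_idx nu b L) ->
    exists nu, w = lincomb_idx nu b L /\ forall i, Rabs (nu i) <= K * vnorm w.
Proof.
  induction L as [|i0 L IH]; intro hnd.
  - exists 0. split; [lra|]. intros w [nu hw]. exists (fun _ => 0). split.
    + rewrite hw; reflexivity.
    + intros; rewrite Rabs_R0; lra.
  - inversion hnd as [|? ? hni hnd']; subst. destruct (IH hnd') as [K [hK HK]].
    assert (hext : forall nu c, (forall i, In i L -> nu i = c i) ->
      lincomb_idx (fun i => if Nat.eq_dec i i0 then 0 else nu i) b (i0 :: L) = lincomb_idx c b L).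
    { intros nu c h. simpl. destruct Nat.eq_dec; [|congruence].
      rewrite (lincomb_ext _ c). apply vec_ext; intro; unfold vadd, vscale; ring.
      intros i hi. destruct Nat.eq_dec; [subst; contradiction|auto]. }
    destruct (classic (exists c, b i0 = lincomb_idx c b L)) as [[c hc]|hc].
    + exists K. split; auto. intros w [nu hw].
      destruct (HK w) as [nu' [hw' hb]].
      { exists (fun i => nu i0 * c i + nu i). rewrite lincomb_lin, <- hc, hw. reflexivity. }
      exists (fun i => if Nat.eq_dec i i0 then 0 else nu' i). split.
      * rewrite hext with (c := nu'); auto.
      * intro i. destruct Nat.eq_dec; auto. rewrite Rabs_R0. pose proof (vnorm_pos w). nra.
    + destruct (farkas_span L b (b i0) hnd' hc) as [d [hd hbd]].
      set (beta := dot (b i0) d) in *.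
      set (C1 := vnorm d / beta).
      assert (hC1 : 0 <= C1) by (unfold C1; apply Rmult_le_pos; [apply vnorm_pos|left; apply Rinv_0_lt_compat; auto]).
      exists (C1 + K * (1 + C1 * vnorm (b i0))). split.
      { pose proof (vnorm_pos (b i0)). apply Rplus_le_le_0_compat; auto. apply Rmult_le_pos; auto. nra. }
      intros w [nu hw].
      set (c0 := dot w d / beta).
      assert (hwd : dot w d = nu i0 * beta).
      { rewrite hw. simpl. rewrite dot_addl, dot_scalel, lincomb_dot. unfold wsum.
        rewrite (sumR_map_ext _ (fun _ => 0)), sumR_map_zero. fold beta. ring.
        intros i hi. rewrite hd; auto; ring. }
      assert (hc0 : c0 = nu i0) by (unfold c0; rewrite hwd; field; lra).
      assert (hbc0 : Rabs c0 <= C1 * vnorm w).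
      { unfold c0, C1. unfold Rdiv. rewrite Rabs_mult, Rabs_inv. rewrite (Rabs_right beta) by lra.
        pose proof (cs_abs w d). pose proof (Rinv_0_lt_compat beta hbd).
        replace (vnorm d * / beta * vnorm w) with ((vnorm w * vnorm d) * / beta) by ring.
        apply Rmult_le_compat_r; lra. }
      set (w' := vsub w (vscale c0 (b i0))).
      assert (hw' : w' = lincomb_idx nu b L).
      { unfold w'. rewrite hw, hc0. simpl. apply vec_ext; intro; unfold vsub, vadd, vscale; ring. }
      destruct (HK w') as [nu' [hw'' hb]]; [eauto|].
      assert (hnw' : vnorm w' <= (1 + C1 * vnorm (b i0)) * vnorm w).
      { unfold w'. replace (vsub w (vscale c0 (b i0))) with (vadd w (vscale (-c0) (b i0)))
          by (apply vec_ext; intro; unfold vadd, vsub, vscale; ring).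
        pose proof (vnorm_triangle w (vscale (- c0) (b i0))). rewrite vnorm_scale, Rabs_Ropp in H.
        pose proof (vnorm_pos (b i0)). pose proof (vnorm_pos w). nra. }
      exists (fun i => if Nat.eq_dec i i0 then c0 else nu' i). split.
      * simpl. destruct Nat.eq_dec; [|congruence]. rewrite (lincomb_ext _ nu').
        rewrite <- hw''. unfold w'. apply vec_ext; intro; unfold vadd, vsub, vscale; ring.
        intros i hi. destruct Nat.eq_dec; [subst; contradiction|auto].
      * intro i. pose proof (vnorm_pos w). pose proof (vnorm_pos (b i0)).
        assert (0 <= K * (1 + C1 * vnorm (b i0)) * vnorm w) by (apply Rmult_le_pos; auto; apply Rmult_le_pos; auto; nra).
        assert (0 <= C1 * vnorm w) by (apply Rmult_le_pos; auto).
        destruct Nat.eq_dec.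
        -- nra.
        -- specialize (hb i). assert (K * vnorm w' <= K * ((1 + C1 * vnorm (b i0)) * vnorm w)) by (apply Rmult_le_compat_l; auto). nra.
Qed.

Lemma wsum_lin2 c f g F L : wsum (fun i => c * f i + g i) F L = c * wsum f F L + wsum g F L.
Proof. unfold wsum. induction L; simpl; [ring|]. rewrite IHL. ring. Qed.

Lemma sumR_lin2 c (f g : nat -> R) L : sumR (map (fun i => c * f i + g i) L) = c * sumR (map f L) + sumR (map g L).
Proof. induction L; simpl; [ring|]. rewrite IHL. ring. Qed.

Lemma min_pos (f : nat -> R) L : (forall i, In i L -> 0 < f i) -> exists d, 0 < d /\ forall i, In i L -> d <= f i.
Proof. induction L; intros H.
  - exists 1; split; [lra|]; intros; contradiction.
  - destruct IHL as [d [hd Hd]]; [intros; apply H; simpl; auto|].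
    exists (Rmin d (f a)). split. apply Rmin_pos; auto. apply H; simpl; auto.
    intros i [<-|hi]. apply Rmin_r. pose proof (Rmin_l d (f a)). pose proof (Hd i hi). lra. Qed.

Lemma vnorm_ext0 {N} (w : vec N) : vnorm (ext w 0) = vnorm w.
Proof. unfold vnorm. f_equal. change (0 * 0 + dot w w = dot w w). ring. Qed.

Lemma aff_Comb_gen {N} L1 L2 (u v : nat -> vec N) (l : list (R * vec N)) :
  (forall p, In p l -> Comb L1 L2 u v (snd p)) ->
  exists Lam M, sumR (map Lam L1) = sumR (map fst l) /\
    lincomb l = vadd (lincomb_idx Lam u L1) (lincomb_idx M v L2).
Proof. induction l as [|[c w] l IH]; intro H.
  - exists (fun _ => 0), (fun _ => 0). split.
    + simpl. apply sumR_map_zero.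
    + apply vec_ext; intro j. unfold vadd. rewrite !lincomb_coord. unfold wsum.
      rewrite (sumR_map_ext _ (fun _ => 0)) by (intros; ring). rewrite (sumR_map_ext (fun i => 0 * v i j) (fun _ => 0)) by (intros; ring).
      rewrite !sumR_map_zero. simpl. unfold vzero. ring.
  - destruct IH as [Lam [M [h1 h2]]]; [intros; apply H; simpl; auto|].
    destruct (H (c, w) (or_introl eq_refl)) as [lam [mu [_ [_ [hs hw]]]]]. simpl in hs, hw.
    exists (fun i => c * lam i + Lam i), (fun i => c * mu i + M i). split.
    + rewrite sumR_lin2, hs, h1. simpl. ring.
    + change (vadd (vscale c w) (lincomb l) = vadd (lincomb_idx (fun i => c * lam i + Lam i) u L1)
        (lincomb_idx (fun i => c * mu i + M i) v L2)).
      rewrite h2, hw, !lincomb_lin. apply vec_ext; intro; unfold vadd, vscale; ring. Qed.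

Lemma aff_Comb {N} L1 L2 (u v : nat -> vec N) y : aff (Comb L1 L2 u v) y ->
  exists Lam M, sumR (map Lam L1) = 1 /\ y = vadd (lincomb_idx Lam u L1) (lincomb_idx M v L2).
Proof. intros [l [h1 [h2 h3]]]. destruct (aff_Comb_gen L1 L2 u v l h1) as [Lam [M [e1 e2]]].
  exists Lam, M. split; [congruence|]. congruence. Qed.

Lemma inb_In_true (L : list nat) i : In i L -> inb (In i L) = true.
Proof. intro; apply inb_true; auto. Qed.
Lemma inb_In_false (L : list nat) i : ~ In i L -> inb (In i L) = false.
Proof. intro h. unfold inb; destruct excluded_middle_informative; [contradiction|reflexivity]. Qed.

Lemma lincomb_neg {N} f (a : nat -> vec N) L : lincomb_idx (fun i => - f i) a L = vscale (-1) (lincomb_idx f a L).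
Proof. apply vec_ext; intro j. unfold vscale. rewrite !lincomb_coord. unfold wsum.
  rewrite <- sumR_map_scal. apply sumR_map_ext. intros; ring. Qed.

Lemma SComb_ri {N} L1 L2 (u v : nat -> vec N) z : NoDup L1 -> NoDup L2 -> (forall i, In i L1 -> ~ In i L2) ->
  SComb L1 L2 u v z -> ri (Comb L1 L2 u v) z.
Proof.
  intros hn1 hn2 hd hz. split; [apply SComb_Comb; auto|].
  destruct hz as (lz & mz & hlz & hmz & plz & pmz & slz & ez).
  destruct (bounded_coords (L1 ++ L2) (hfam L1 u v) (NoDup_app_disj _ _ hn1 hn2 hd)) as [K [hK HK]].
  destruct (min_pos lz L1 plz) as [d1 [hd1 Hd1]].
  destruct (min_pos mz L2 pmz) as [d2 [hd2 Hd2]].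
  set (d0 := Rmin d1 d2). assert (hd0 : 0 < d0) by (apply Rmin_pos; auto).
  exists (d0 / (K + 1)). split; [apply Rdiv_lt_0_compat; lra|].
  intros y hy hyz. destruct (aff_Comb _ _ _ _ _ hy) as [Lam [M [sL ey]]].
  set (del := fun i => if inb (In i L1) then Lam i - lz i else M i - mz i).
  assert (hdel : ext (vsub y z) 0 = lincomb_idx del (hfam L1 u v) (L1 ++ L2)).
  { rewrite lincomb_hfam by auto.
    rewrite (lincomb_ext del (fun i => 1 * Lam i + - lz i) u L1).
    2:{ intros i hi. unfold del. rewrite inb_In_true; auto. ring. }
    rewrite (lincomb_ext del (fun i => 1 * M i + - mz i) v L2).
    2:{ intros i hi. unfold del. rewrite inb_In_false; [ring|]. intro h; apply (hd i); auto. }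
    rewrite (sumR_map_ext del (fun i => 1 * Lam i + (-1) * lz i)).
    2:{ intros i hi. unfold del. rewrite inb_In_true; auto. ring. }
    rewrite sumR_lin2, sL, sumR_map_scal, slz.
    replace (1 * 1 + -1 * 1) with 0 by ring. f_equal.
    rewrite !lincomb_lin, ey, ez. 
    rewrite !lincomb_neg.
    apply vec_ext; intro j. unfold vsub, vadd, vscale. ring. }
  destruct (HK (ext (vsub y z) 0)) as [nu [enu bnu]]; [eauto|].
  rewrite vnorm_ext0 in bnu. rewrite lincomb_hfam in enu by auto.
  apply ext_eq in enu as [enu snu].
  assert (hnu : forall i, Rabs (nu i) < d0).
  { intro i. specialize (bnu i). 
    assert (K * vnorm (vsub y z) <= K * (d0 / (K + 1))) by (apply Rmult_le_compat_l; lra).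
    assert (K * (d0 / (K + 1)) < d0).
    { unfold Rdiv. apply Rmult_lt_reg_r with (r := K + 1); [lra|].
      rewrite Rmult_assoc, Rmult_assoc, Rinv_l by lra. nra. }
    lra. }
  exists (fun i => if inb (In i L1) then lz i + nu i else 0),
         (fun i => if inb (In i L2) then mz i + nu i else 0).
  assert (hd01 : d0 <= d1) by apply Rmin_l. assert (hd02 : d0 <= d2) by apply Rmin_r.
  repeat split.
  - intro i. destruct (inb (In i L1)) eqn:e; [|lra]. apply (proj1 (inb_true _)) in e.
    specialize (Hd1 i e). specialize (hnu i). pose proof (Rle_abs (- nu i)). rewrite Rabs_Ropp in H. lra.
  - intro i. destruct (inb (In i L2)) eqn:e; [|lra]. apply (proj1 (inb_true _)) in e.
    specialize (Hd2 i e). specialize (hnu i). pose proof (Rle_abs (- nu i)). rewrite Rabs_Ropp in H. lra.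
  - rewrite (sumR_map_ext _ (fun i => 1 * lz i + nu i)).
    2:{ intros i hi. rewrite inb_In_true; auto. ring. }
    rewrite sumR_lin2, slz, <- snu. ring.
  - rewrite (lincomb_ext _ (fun i => 1 * lz i + nu i) u L1).
    2:{ intros i hi. rewrite inb_In_true; auto. ring. }
    rewrite (lincomb_ext _ (fun i => 1 * mz i + nu i) v L2).
    2:{ intros i hi. rewrite inb_In_true; auto. ring. }
    rewrite !lincomb_lin. apply vec_ext; intro j.
    assert (hj : vsub y z j = vadd (lincomb_idx nu u L1) (lincomb_idx nu v L2) j) by (rewrite enu; auto).
    rewrite ez in hj. unfold vsub, vadd, vscale in *. lra.
Qed.

Lemma aff_two {N} (S : vset N) x c t : S x -> S c -> aff S (vadd x (vscale t (vsub x c))).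
Proof. intros hx hc. exists ((1 + t, x) :: (-t, c) :: nil). split; [|split].
  - intros p [<-|[<-|[]]]; auto.
  - simpl. ring.
  - apply vec_ext; intro j. simpl. unfold vadd, vscale, vsub, vzero. ring. Qed.

Lemma ri_SComb {N} L1 L2 (u v : nat -> vec N) z : L1 <> nil ->
  ri (Comb L1 L2 u v) z -> SComb L1 L2 u v z.
Proof.
  intros hne [hz [eps [heps H]]].
  set (n1 := INR (length L1)).
  assert (hn1 : 0 < n1) by (unfold n1; destruct L1; [congruence|]; simpl length; rewrite S_INR; pose proof (pos_INR (length L1)); lra).
  set (c := vadd (lincomb_idx (fun _ => / n1) u L1) (lincomb_idx (fun _ => 1) v L2)).
  assert (hc : Comb L1 L2 u v c).
  { exists (fun _ => / n1), (fun _ => 1). repeat split; auto.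
    - intros; left; apply Rinv_0_lt_compat; auto.
    - intros; lra.
    - rewrite sumR_map_const. fold n1. field. lra. }
  set (t := eps / (2 * (vnorm (vsub z c) + 1))).
  pose proof (vnorm_pos (vsub z c)).
  assert (ht : 0 < t) by (unfold t; apply Rdiv_lt_0_compat; lra).
  assert (hz' : Comb L1 L2 u v (vadd z (vscale t (vsub z c)))).
  { apply H. apply aff_two; auto.
    replace (vsub (vadd z (vscale t (vsub z c))) z) with (vscale t (vsub z c))
      by (apply vec_ext; intro; unfold vsub, vadd, vscale; ring).
    rewrite vnorm_scale, Rabs_right by lra. unfold t.
    apply Rlt_le_trans with (eps / 2 ). 2: lra.
    unfold Rdiv. rewrite Rinv_mult.
    replace (eps * (/ 2 * / (vnorm (vsub z c) + 1)) * vnorm (vsub z c)) with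
      (eps / 2 * (vnorm (vsub z c) / (vnorm (vsub z c) + 1))) by (field; lra).
    assert (vnorm (vsub z c) / (vnorm (vsub z c) + 1) < 1).
    { apply Rmult_lt_reg_r with (vnorm (vsub z c) + 1); [lra|]. unfold Rdiv.
      rewrite Rmult_assoc, Rinv_l by lra. lra. }
    assert (0 < eps / 2) by lra. unfold Rdiv at 1 in H2. nra. }
  destruct hz' as (lam & mu & hl & hm & sl & e).
  exists (fun i => / (1 + t) * lam i + (t / (1 + t)) * / n1),
         (fun i => / (1 + t) * mu i + (t / (1 + t)) * 1).
  assert (h1t : 0 < / (1 + t)) by (apply Rinv_0_lt_compat; lra).
  assert (h2t : 0 < t / (1 + t)) by (apply Rdiv_lt_0_compat; lra).
  assert (0 < / n1) by (apply Rinv_0_lt_compat; auto).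
  repeat split.
  - intro i; specialize (hl i); nra.
  - intro i; specialize (hm i); nra.
  - intros i _; specialize (hl i); nra.
  - intros i _; specialize (hm i); nra.
  - rewrite sumR_lin2, sl, sumR_map_const. fold n1. field. split; lra.
  - rewrite !lincomb_lin.
    apply vec_ext; intro j.
    assert (hj := f_equal (fun w => w j) e). simpl in hj.
    unfold c, vadd, vscale, vsub in hj. unfold vadd, vscale.
    rewrite !lincomb_coord in *. unfold wsum in *.
    rewrite (sumR_map_ext (fun i => t / (1 + t) * / n1 * u i j) (fun i => t / (1 + t) * (/ n1 * u i j))) by (intros; ring).
    rewrite (sumR_map_ext (fun i => t / (1 + t) * 1 * v i j) (fun i => t / (1 + t) * (1 * v i j))) by (intros; ring).
    rewrite !sumR_map_scal.
    rewrite ?sumR_map_scal in hj.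
    set (A := sumR (map (fun i : nat => u i j) L1)) in *.
    set (B := sumR (map (fun i : nat => v i j) L2)) in *.
    set (La := sumR (map (fun i : nat => lam i * u i j) L1)) in *.
    set (Mu := sumR (map (fun i : nat => mu i * v i j) L2)) in *.
    assert (hjz : La = z j + t * (z j - (/ n1 * A + 1 * B)) - Mu) by lra.
    rewrite hjz. field. lra.
Qed.

Lemma ri_Comb_eq {N} L1 L2 (u v : nat -> vec N) : NoDup L1 -> NoDup L2 -> (forall i, In i L1 -> ~ In i L2) ->
  L1 <> nil -> ri (Comb L1 L2 u v) = SComb L1 L2 u v.
Proof. intros. apply functional_extensionality; intro z. apply propositional_extensionality; split.
  - apply ri_SComb; auto. - apply SComb_ri; auto. Qed.

Lemma SComb_bary {N} L1 L2 (u v : nat -> vec N) : L1 <> nil ->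
  SComb L1 L2 u v (vadd (lincomb_idx (fun _ => / INR (length L1)) u L1) (lincomb_idx (fun _ => 1) v L2)).
Proof. intro hne.
  assert (hn1 : 0 < INR (length L1)) by (destruct L1; [congruence|]; simpl length; rewrite S_INR; pose proof (pos_INR (length L1)); lra).
  exists (fun _ => / INR (length L1)), (fun _ => 1).
  pose proof (Rinv_0_lt_compat _ hn1).
  repeat split; auto; try (intros; lra).
  rewrite sumR_map_const. field. lra. Qed.

Lemma Comb_cl_SComb {N} L1 L2 (u v : nat -> vec N) g : L1 <> nil ->
  Comb L1 L2 u v g -> closure (SComb L1 L2 u v) g.
Proof.
  intros hne (lam & mu & hl & hm & sl & eg) eps heps.
  set (n1 := INR (length L1)).
  assert (hn1 : 0 < n1) by (unfold n1; destruct L1; [congruence|]; simpl length; rewrite S_INR; pose proof (pos_INR (length L1)); lra).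
  set (c := vadd (lincomb_idx (fun _ => / n1) u L1) (lincomb_idx (fun _ => 1) v L2)).
  pose proof (vnorm_pos (vsub c g)).
  set (t := Rmin 1 (eps / (2 * (vnorm (vsub c g) + 1)))).
  assert (ht : 0 < t) by (unfold t; apply Rmin_pos; [lra|apply Rdiv_lt_0_compat; lra]).
  assert (ht1 : t <= 1) by apply Rmin_l.
  assert (ht2 : t <= eps / (2 * (vnorm (vsub c g) + 1))) by apply Rmin_r.
  exists (vadd g (vscale t (vsub c g))). split.
  - exists (fun i => (1 - t) * lam i + t * / n1), (fun i => (1 - t) * mu i + t * 1).
    pose proof (Rinv_0_lt_compat _ hn1).
    repeat split.
    + intro i; specialize (hl i); nra.
    + intro i; specialize (hm i); nra.
    + intros i _; specialize (hl i); nra.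
    + intros i _; specialize (hm i); nra.
    + rewrite sumR_lin2, sl, sumR_map_const. fold n1. field. lra.
    + rewrite !lincomb_lin. apply vec_ext; intro j. unfold c. rewrite eg. unfold vadd, vscale, vsub.
      rewrite !lincomb_coord. unfold wsum.
      rewrite (sumR_map_ext (fun i => t * / n1 * u i j) (fun i => t * (/ n1 * u i j))) by (intros; ring).
      rewrite (sumR_map_ext (fun i => t * 1 * v i j) (fun i => t * (1 * v i j))) by (intros; ring).
      rewrite !sumR_map_scal. ring.
  - replace (vsub (vadd g (vscale t (vsub c g))) g) with (vscale t (vsub c g))
      by (apply vec_ext; intro; unfold vsub, vadd, vscale; ring).
    rewrite vnorm_scale, Rabs_right by lra.
    assert (eps / (2 * (vnorm (vsub c g) + 1)) * vnorm (vsub c g) < eps).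
    { assert (eps / (2 * (vnorm (vsub c g) + 1)) * vnorm (vsub c g) = eps * (vnorm (vsub c g) / (2 * (vnorm (vsub c g) + 1)))) by (field; lra).
      rewrite H0. assert (vnorm (vsub c g) / (2 * (vnorm (vsub c g) + 1)) < 1).
      { apply Rmult_lt_reg_r with (2 * (vnorm (vsub c g) + 1)); [lra|]. unfold Rdiv. rewrite Rmult_assoc, Rinv_l by lra. lra. }
      nra. }
    nra.
Qed.

Lemma collapse {N} (a : nat -> vec N) L : NoDup L -> forall l lam, (forall i, In i l -> In i L) ->
  (forall i, 0 <= lam i) -> exists lam', (forall i, 0 <= lam' i) /\
    sumR (map lam' L) = sumR (map lam l) /\ lincomb_idx lam' a L = lincomb_idx lam a l.
Proof.
  intros hnd l lam hin hl. induction l as [|i0 l IH].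
  - exists (fun _ => 0). split; [intros; lra|]. split.
    + simpl. apply sumR_map_zero.
    + apply vec_ext; intro j. rewrite lincomb_coord. unfold wsum.
      rewrite (sumR_map_ext _ (fun _ => 0)) by (intros; ring). rewrite sumR_map_zero. reflexivity.
  - destruct IH as [lam' [h1 [h2 h3]]]; [intros; apply hin; simpl; auto|].
    assert (hi0 : In i0 L) by (apply hin; simpl; auto).
    exists (fun i => lam' i + (if Nat.eq_dec i i0 then lam i0 else 0)). split; [|split].
    + intro i. destruct Nat.eq_dec; specialize (h1 i); specialize (hl i0); lra.
    + rewrite sumR_map_add, h2. rewrite (sumR_map_single (fun _ => lam i0)) by auto. simpl. ring.
    + apply vec_ext; intro j. simpl. unfold vadd, vscale. rewrite <- h3.
      rewrite !lincomb_coord. unfold wsum.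
      rewrite (sumR_map_ext _ (fun i => lam' i * a i j + (if Nat.eq_dec i i0 then lam i0 * a i j else 0))).
      2:{ intros i _. destruct Nat.eq_dec; ring. }
      rewrite sumR_map_add. rewrite (sumR_map_single (fun i => lam i0 * a i j)) by auto. ring.
Qed.

Lemma conv_Comb {N} (P : nat -> Prop) (a : nat -> vec N) L : NoDup L -> (forall i, P i <-> In i L) ->
  conv_fam P a = Comb L nil a a.
Proof. intros hnd hP. apply functional_extensionality; intro y. apply propositional_extensionality. split.
  - intros (l & lam & hin & hl & hs & ey).
    destruct (collapse a L hnd l lam) as [lam' [h1 [h2 h3]]]; auto. intros; apply hP; auto.
    exists lam', (fun _ => 0). split; [auto|split; [intros; lra|split; [rewrite h2; auto|]]].
    rewrite ey, <- h3. apply vec_ext; intro; unfold vadd; simpl; unfold vzero; ring.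
  - intros (lam & mu & hl & hm & hs & ey). exists L, lam. repeat split; auto.
    + intros; apply hP; auto.
    + rewrite ey. apply vec_ext; intro; unfold vadd; simpl; unfold vzero; ring. Qed.

Lemma cone_Comb {N} (P : nat -> Prop) (a : nat -> vec N) L : NoDup L -> (forall i, P i <-> In i L) ->
  cone_fam P a = Comb (0%nat :: nil) L (fun _ => vzero) a.
Proof. intros hnd hP. apply functional_extensionality; intro y. apply propositional_extensionality. split.
  - intros (l & lam & hin & hl & ey).
    destruct (collapse a L hnd l lam) as [lam' [h1 [h2 h3]]]; auto. intros; apply hP; auto.
    exists (fun _ => 1), lam'. split; [intros; lra|split; [auto|split; [simpl; ring|]]].
    rewrite ey, <- h3. apply vec_ext; intro; unfold vadd, vscale; simpl; unfold vadd, vscale, vzero; ring.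
  - intros (lam & mu & hl & hm & hs & ey). exists L, mu. repeat split; auto.
    + intros; apply hP; auto.
    + rewrite ey. apply vec_ext; intro; unfold vadd; simpl; unfold vadd, vscale, vzero; ring. Qed.

Lemma Mst_SComb {N} (P1 P2 : nat -> Prop) (a : nat -> vec N) L1 L2 :
  NoDup L1 -> NoDup L2 -> (forall i, In i L1 -> ~ In i L2) -> L1 <> nil -> ~ In 0%nat L2 ->
  (forall i, P1 i <-> In i L1) -> (forall i, P2 i <-> In i L2) ->
  msum (ri (conv_fam P1 a)) (ri (cone_fam P2 a)) = SComb L1 L2 a a.
Proof.
  intros h1 h2 hd hne h0 hP1 hP2.
  rewrite (conv_Comb P1 a L1), (cone_Comb P2 a L2) by auto.
  rewrite !ri_Comb_eq; auto; try (constructor; [simpl; auto|constructor]); try congruence.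
  2:{ intros i [<-|[]]; auto. }
  apply functional_extensionality; intro z. apply propositional_extensionality. split.
  - intros (x1 & x2 & (l1 & m1 & hl1 & hm1 & pl1 & pm1 & s1 & e1) & (l2 & m2 & hl2 & hm2 & pl2 & pm2 & s2 & e2) & ez).
    exists l1, m2. repeat split; auto.
    rewrite ez, e1, e2. apply vec_ext; intro; unfold vadd; simpl; unfold vadd, vscale, vzero; ring.
  - intros (l & mu & hl & hm & pl & pm & s & ez).
    exists (vadd (lincomb_idx l a L1) (lincomb_idx (fun _ => 1) a nil)),
           (vadd (lincomb_idx (fun _ => 1) (fun _ => vzero) (0%nat :: nil)) (lincomb_idx mu a L2)).
    split; [|split].
    + exists l, (fun _ => 1). repeat split; auto; try (intros; lra); intros i [].
    + exists (fun _ => 1), mu. repeat split; auto; try (intros; lra); try (simpl; ring).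
    + rewrite ez. apply vec_ext; intro; unfold vadd; simpl; unfold vadd, vscale, vzero; ring.
- constructor. Qed.

Lemma rmax_ge (f : nat -> R) k i : (1 <= i <= k)%nat -> f i <= rmax_range f k.
Proof. induction k; intros h; [lia|]. destruct k.
  - simpl. assert (i = 1%nat) by lia; subst; lra.
  - change (rmax_range f (S (S k))) with (Rmax (rmax_range f (S k)) (f (S (S k)))).
    destruct (Nat.eq_dec i (S (S k))).
    + subst. apply Rmax_r.
    + eapply Rle_trans; [apply IHk; lia|apply Rmax_l]. Qed.

Lemma rmax_att (f : nat -> R) k : (1 <= k)%nat -> exists i, (1 <= i <= k)%nat /\ rmax_range f k = f i.
Proof. induction k; intros h; [lia|]. destruct k.
  - exists 1%nat; split; [lia|reflexivity].
  - change (rmax_range f (S (S k))) with (Rmax (rmax_range f (S k)) (f (S (S k)))).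
    destruct (IHk ltac:(lia)) as [i [hi e]].
    unfold Rmax; destruct Rle_dec.
    + exists (S (S k)); split; [lia|auto].
    + exists i; split; [lia|auto]. Qed.

Lemma esup_val (P : R -> Prop) v : P v -> (forall t, P t -> t <= v) -> esup P = Fin v.
Proof. intros hv hb. unfold esup. destruct excluded_middle_informative as [h|h].
  - f_equal. destruct (completeness P (proj1 h) (proj2 h)) as [l [hl1 hl2]]. simpl.
    apply Rle_antisym. apply hl2. intros t ht; auto. apply hl1; auto.
  - exfalso. apply h. split; [exists v; intros t ht; auto|eauto]. Qed.

Lemma esup_ub (P : R -> Prop) s t : esup P = Fin s -> P t -> t <= s.
Proof. unfold esup. destruct excluded_middle_informative as [h|h]; [|discriminate].
  intros e. inversion e. destruct (completeness P (proj1 h) (proj2 h)) as [l [hl1 hl2]]. simpl. auto. Qed.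

Lemma esup_le (P : R -> Prop) v : (exists t, P t) -> (forall t, P t -> t <= v) -> exists s, esup P = Fin s /\ s <= v.
Proof. intros hne hb. unfold esup. destruct excluded_middle_informative as [h|h].
  - eexists; split; [reflexivity|]. destruct (completeness P (proj1 h) (proj2 h)) as [l [hl1 hl2]]. simpl.
    apply hl2. intros t ht; auto.
  - exfalso. apply h. split; [exists v; intros t ht; auto|auto]. Qed.


Definition feas0 {N} k m (a : nat -> vec N) alpha x := poly_feas k m a alpha x.
Lemma small_step v eps : 0 <= v -> 0 < eps -> eps / (2 * (v + 1)) * v < eps.
Proof. intros hv he.
  assert (eps / (2 * (v + 1)) * v = eps * (v / (2 * (v + 1)))) by (field; lra).
  rewrite H. assert (v / (2 * (v + 1)) < 1).
  { apply Rmult_lt_reg_r with (2 * (v + 1)); [lra|]. unfold Rdiv. rewrite Rmult_assoc, Rinv_l by lra. lra. }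
  nra. Qed.


Lemma filter_len_le (p q : nat -> bool) (l : list nat) : (forall i, In i l -> p i = true -> q i = true) ->
  (length (filter p l) <= length (filter q l))%nat.
Proof. induction l as [|x l IH]; intro h; simpl; [lia|].
  assert (IH' := IH (fun i hi => h i (or_intror hi))).
  destruct (p x) eqn:e1; destruct (q x) eqn:e2; simpl; try lia.
  rewrite h in e2; [discriminate|left; auto|auto]. Qed.

Lemma filter_len_lt (p q : nat -> bool) (l : list nat) : (forall i, In i l -> p i = true -> q i = true) ->
  (exists j, In j l /\ p j = false /\ q j = true) -> (length (filter p l) < length (filter q l))%nat.
Proof. induction l as [|x l IH]; intros h [j [hj [e1 e2]]]; [destruct hj|]. simpl.
  assert (hle := filter_len_le p q l (fun i hi => h i (or_intror hi))).
  destruct hj as [<-|hj].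
  - rewrite e1, e2. simpl. lia.
  - assert (IH' := IH (fun i hi => h i (or_intror hi)) (ex_intro _ j (conj hj (conj e1 e2)))).
    destruct (p x) eqn:f1; destruct (q x) eqn:f2; simpl; try lia.
    rewrite h in f2; [discriminate|left; auto|auto]. Qed.


Lemma wsum_lin3 s f g h F L : wsum (fun i => s * (f i + g i + h i)) F L = s * (wsum f F L + wsum g F L + wsum h F L).
Proof. unfold wsum. induction L; simpl; [ring|]. rewrite IHL; ring. Qed.
Lemma wsum_lin2' s f g F L : wsum (fun i => s * (f i + g i)) F L = s * (wsum f F L + wsum g F L).
Proof. unfold wsum. induction L; simpl; [ring|]. rewrite IHL; ring. Qed.
Lemma wsum_delta F L j : NoDup L -> In j L -> wsum (fun i => if Nat.eq_dec i j then 1 else 0) F L = F j.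
Proof. intros hnd hj. unfold wsum. rewrite <- (sumR_map_single F L j hnd hj). apply sumR_map_ext.
  intros i _. destruct Nat.eq_dec; ring. Qed.


Fixpoint sublists (l : list nat) : list (list nat) :=
  match l with nil => nil :: nil | x :: l' => map (cons x) (sublists l') ++ sublists l' end.

Lemma filter_sublists (p : nat -> bool) l : In (filter p l) (sublists l).
Proof. induction l as [|x l IH]; simpl; auto. destruct (p x); apply in_or_app; [left; apply in_map|right]; auto. Qed.

Lemma finite_image {X Y} (B : list X) (P : X -> Prop) (F : X -> Y) :
  exists L, forall y, In y L <-> exists s, In s B /\ P s /\ y = F s.
Proof. induction B as [|s B [L HL]].
  - exists nil. intros y; split; [intros []|intros [s [[] _]]].
  - destruct (classic (P s)) as [hp|hp].
    + exists (F s :: L). intro y. split.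
      * intros [<-|h]. exists s; split; [left|]; auto. apply HL in h as [s' [h1 h2]]. exists s'; split; [right|]; auto.
      * intros [s' [[<-|h1] [h2 ->]]]. left; auto. right; apply HL; eauto.
    + exists L. intro y. split.
      * intro h. apply HL in h as [s' [h1 h2]]. exists s'; split; [right|]; auto.
      * intros [s' [[<-|h1] [h2 ->]]]. contradiction. apply HL; eauto. Qed.

Section Poly.
Variables (N k m : nat) (a : nat -> vec N) (alpha : nat -> R).
Hypothesis Hk : (1 <= k <= m)%nat.
Hypothesis Hdom : exists x : vec N, poly_feas k m a alpha x.

Definition ell i (x : vec N) := dot (a i) x - alpha i.
Definition Rv (x : vec N) := rmax_range (fun i => ell i x) k.
Definition feas (x : vec N) := poly_feas k m a alpha x.
Definition act (x : vec N) (i : nat) : Prop :=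
  ((1 <= i <= k)%nat /\ ell i x = Rv x) \/ ((k + 1 <= i <= m)%nat /\ dot (a i) x = alpha i).
Definition Rf := polyR k m a alpha.

Lemma Rf_fin x : feas x -> Rf x = Fin (Rv x).
Proof. intro h. unfold Rf, polyR. destruct excluded_middle_informative; [reflexivity|contradiction]. Qed.
Lemma Rf_inf x : ~ feas x -> Rf x = PInf.
Proof. intro h. unfold Rf, polyR. destruct excluded_middle_informative; [contradiction|reflexivity]. Qed.
Lemma Rf_fin_iff x r : Rf x = Fin r <-> feas x /\ r = Rv x.
Proof. split.
  - unfold Rf, polyR. destruct excluded_middle_informative; intro h; [|discriminate].
    inversion h; auto.
  - intros [h ->]. apply Rf_fin; auto. Qed.
Lemma edom_feas x : edom Rf x <-> feas x.
Proof. split. intros [r h]. apply Rf_fin_iff in h; tauto. intro h; exists (Rv x); apply Rf_fin; auto. Qed.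

Lemma ell_ge x i : (1 <= i <= k)%nat -> ell i x <= Rv x.
Proof. intro; apply (rmax_ge (fun i => ell i x)); auto. Qed.
Lemma Rv_att x : exists i, (1 <= i <= k)%nat /\ Rv x = ell i x.
Proof. apply (rmax_att (fun i => ell i x)); lia. Qed.

Lemma Imax_act x i : feas x -> ((Imax k m a alpha x i \/ Ifeas k m a alpha x i) <-> act x i).
Proof. intro hf. unfold Imax, Ifeas, act. fold Rf. rewrite Rf_fin by auto.
  split; intros [[h1 h2]|[h1 h2]].
  - left; split; auto. inversion h2; unfold ell, Rv; auto.
  - right; auto.
  - left; split; auto. f_equal. symmetry; auto.
  - right; auto. Qed.

Lemma M_I_iff I x : M_I k m a alpha I x <-> feas x /\ forall i, I i <-> act x i.
Proof. unfold M_I. fold Rf. rewrite edom_feas. split.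
  - intros [hf h]. split; auto. intro i. rewrite h. apply Imax_act; auto.
  - intros [hf h]. split; auto. intro i. rewrite h. symmetry; apply Imax_act; auto. Qed.

Lemma act_range x i : act x i -> (1 <= i <= m)%nat.
Proof. unfold act; lia. Qed.

Lemma ell_line i (x : vec N) t (w : vec N) : ell i (vadd x (vscale t w)) = ell i x + t * dot (a i) w.
Proof. unfold ell. rewrite dot_addr, dot_scaler. ring. Qed.

Lemma vsub_line (x : vec N) t (w : vec N) : vsub (vadd x (vscale t w)) x = vscale t w.
Proof. apply vec_ext; intro; unfold vsub, vadd, vscale; ring. Qed.

Lemma Rv_le (x : vec N) c : (forall i, (1 <= i <= k)%nat -> ell i x <= c) -> Rv x <= c.
Proof. intro h. destruct (Rv_att x) as [i [hi e]]. rewrite e; auto. Qed.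

Lemma Rv_lt (x : vec N) c : (forall i, (1 <= i <= k)%nat -> ell i x < c) -> Rv x < c.
Proof. intro h. destruct (Rv_att x) as [i [hi e]]. rewrite e; auto. Qed.

Definition Lmax (I : nat -> Prop) := sel I 1 k.
Definition Lfeas (I : nat -> Prop) := sel I (k + 1) (m - k).
Lemma Lmax_In I i : In i (Lmax I) <-> I i /\ (1 <= i <= k)%nat.
Proof. unfold Lmax; rewrite sel_In. split; intros [h1 h2]; split; auto; lia. Qed.
Lemma Lfeas_In I i : In i (Lfeas I) <-> I i /\ (k + 1 <= i <= m)%nat.
Proof. unfold Lfeas; rewrite sel_In. split; intros [h1 h2]; split; auto; lia. Qed.
Lemma L_disj I i : In i (Lmax I) -> ~ In i (Lfeas I).
Proof. rewrite Lmax_In, Lfeas_In. lia. Qed.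
Lemma Lmax_ND I : NoDup (Lmax I). Proof. apply sel_NoDup. Qed.
Lemma Lfeas_ND I : NoDup (Lfeas I). Proof. apply sel_NoDup. Qed.

Definition DI I := Comb (Lmax I) (Lfeas I) a a.
Definition PI I := SComb (Lmax I) (Lfeas I) a a.

Lemma subdiff_iff x g : feas x ->
  (subdiff Rf x g <-> forall y, feas y -> Rv x + dot g (vsub y x) <= Rv y).
Proof. intro hf. unfold subdiff. split.
  - intros [fx [e H]] y hy. rewrite Rf_fin in e by auto. inversion e; subst.
    apply H. apply Rf_fin; auto.
  - intro H. exists (Rv x). split; [apply Rf_fin; auto|]. intros y fy e.
    apply Rf_fin_iff in e as [hy ->]. auto. Qed.

Lemma DI_subdiff x g : feas x -> DI (act x) g -> subdiff Rf x g.
Proof.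
  intros hf (lam & mu & hl & hm & sl & eg). apply subdiff_iff; auto. intros y hy.
  rewrite eg, dot_addl, !lincomb_dot. unfold wsum.
  assert (sumR (map (fun i => lam i * dot (a i) (vsub y x)) (Lmax (act x))) <= 
          sumR (map (fun i => lam i * (Rv y - Rv x)) (Lmax (act x)))).
  { apply sumR_map_le. intros i hi. apply Lmax_In in hi as [ha hi].
    apply Rmult_le_compat_l; auto. rewrite dot_subr.
    destruct ha as [[_ ha]|[hr _]]; [|lia].
    pose proof (ell_ge y i hi). unfold ell in *. lra. }
  assert (sumR (map (fun i => mu i * dot (a i) (vsub y x)) (Lfeas (act x))) <= 0).
  { rewrite <- (sumR_map_zero (Lfeas (act x))). apply sumR_map_le. intros i hi. apply Lfeas_In in hi as [ha hi].
    destruct ha as [[hr _]|[_ ha]]; [lia|].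
    specialize (hy i hi). rewrite dot_subr. specialize (hm i). nra. }
  rewrite (sumR_map_ext (fun i => lam i * (Rv y - Rv x)) (fun i => (Rv y - Rv x) * lam i)) in H by (intros; ring).
  rewrite sumR_map_scal, sl in H. lra.
Qed.

Lemma subdiff_DI x g : feas x -> subdiff Rf x g -> DI (act x) g.
Proof.
  intros hf hs. rewrite subdiff_iff in hs by auto.
  destruct (farkas_aff (Lmax (act x)) (Lfeas (act x)) a g (Lmax_ND _) (Lfeas_ND _) (L_disj _))
    as [h|[d [hd1 hd2]]]; auto. exfalso.
  set (gd := dot g d).
  destruct (small_t_list (seq 1 m)
     (fun i t => ((i <= k)%nat -> ell i (vadd x (vscale t d)) < Rv x + t * gd) /\
                 ((k + 1 <= i <= m)%nat -> ell i (vadd x (vscale t d)) <= 0))) as [t0 [ht0 Ht0]].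
  { intros i hi. apply in_seq in hi.
    destruct (classic (act x i)) as [ha|hna].
    - exists 1. split; [lra|]. intros t ht. rewrite ell_line. split.
      + intro hik. assert (In i (Lmax (act x))) by (apply Lmax_In; split; auto; lia).
        specialize (hd1 i H). destruct ha as [[_ ha]|[hr _]]; [|lia]. rewrite ha. fold gd in hd1. nra.
      + intro hik. assert (In i (Lfeas (act x))) by (apply Lfeas_In; split; auto; lia).
        specialize (hd2 i H). destruct ha as [[hr _]|[_ ha]]; [lia|]. unfold ell. rewrite ha. nra.
    - destruct (Compare_dec.le_lt_dec i k) as [hik|hik].
      + assert (ell i x < Rv x).
        { pose proof (ell_ge x i ltac:(lia)). destruct H; auto. exfalso; apply hna; left; split; auto; lia. }
        destruct (small_lt (ell i x - Rv x) (dot (a i) d - gd)) as [dd [hdd Hdd]]; [lra|].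
        exists dd; split; auto. intros t ht. split; [|lia]. intros _. rewrite ell_line.
        specialize (Hdd t ht). lra.
      + assert (ell i x < 0).
        { specialize (hf i ltac:(lia)). fold (ell i x) in hf. destruct hf; auto. exfalso; apply hna; right; split; [lia|]. unfold ell in H; lra. }
        destruct (small_lt (ell i x) (dot (a i) d)) as [dd [hdd Hdd]]; [lra|].
        exists dd; split; auto. intros t ht. split; [lia|]. intros _. rewrite ell_line.
        specialize (Hdd t ht). lra. }
  set (t := t0 / 2). assert (ht : 0 < t < t0) by (unfold t; lra).
  set (y := vadd x (vscale t d)).
  assert (hy : feas y).
  { intros i hi. apply (Ht0 t ht i); [apply in_seq; lia|lia]. }
  specialize (hs y hy). unfold y in hs. rewrite vsub_line, dot_scaler in hs. fold gd in hs.
  assert (Rv (vadd x (vscale t d)) < Rv x + t * gd).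
  { apply Rv_lt. intros i hi. apply (Ht0 t ht i); [apply in_seq; lia|lia]. }
  lra.
Qed.

Lemma subdiff_eq x : feas x -> subdiff Rf x = DI (act x).
Proof. intro hf. apply functional_extensionality; intro g. apply propositional_extensionality.
  split; [apply subdiff_DI; auto|apply DI_subdiff; auto]. Qed.


Lemma conj_P_iff g t : (exists x r, Rf x = Fin r /\ t = dot g x - r) <-> exists x, feas x /\ t = dot g x - Rv x.
Proof. split.
  - intros [x [r [e ->]]]. apply Rf_fin_iff in e as [hx ->]. eauto.
  - intros [x [hx ->]]. exists x, (Rv x). split; auto. apply Rf_fin; auto. Qed.

Lemma conj_val x g : feas x -> subdiff Rf x g -> conjugate Rf g = Fin (dot g x - Rv x).
Proof. intros hx hs. rewrite subdiff_iff in hs by auto. unfold conjugate. apply esup_val.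
  - apply conj_P_iff. eauto.
  - intros t ht. apply conj_P_iff in ht as [y [hy ->]]. specialize (hs y hy). rewrite dot_subr in hs. lra. Qed.

Lemma conj_fin_ub g c y : conjugate Rf g = Fin c -> feas y -> dot g y - Rv y <= c.
Proof. intros e hy. eapply esup_ub; [apply e|]. apply conj_P_iff. eauto. Qed.

Lemma conj_subdiff_inv g y : subdiff (conjugate Rf) g y -> feas y /\ subdiff Rf y g.
Proof.
  intros [c [ec H]].
  assert (hfy : feas y).
  { intros j hj. apply Rnot_lt_le. intro hlt.
    destruct (esup_le (fun t => exists x r, Rf x = Fin r /\ t = dot (vadd g (a j)) x - r) (c + alpha j))
      as [s [es hs]].
    - destruct Hdom as [x hx].
      exists (dot (vadd g (a j)) x - Rv x). apply conj_P_iff; eauto.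
    - intros t ht. apply conj_P_iff in ht as [x [hx ->]]. rewrite dot_addl.
      pose proof (conj_fin_ub g c x ec hx). specialize (hx j hj). lra.
    - specialize (H _ _ es). 
      replace (vsub (vadd g (a j)) g) with (a j) in H by (apply vec_ext; intro; unfold vsub, vadd; ring).
      rewrite dot_comm in H. lra. }
  split; auto.
  destruct (Rv_att y) as [i [hi ei]].
  destruct (esup_le (fun t => exists x r, Rf x = Fin r /\ t = dot (a i) x - r) (alpha i)) as [s [es hs]].
  - exists (dot (a i) y - Rv y). apply conj_P_iff; eauto.
  - intros t ht. apply conj_P_iff in ht as [x [hx ->]].
    pose proof (ell_ge x i hi). unfold ell in H0. lra.
  - specialize (H _ _ es). rewrite dot_subr, (dot_comm y (a i)), (dot_comm y g) in H.
    apply subdiff_iff; auto. intros z hz. pose proof (conj_fin_ub g c z ec hz).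
    rewrite dot_subr. rewrite ei in *. unfold ell in *. lra.
Qed.

Lemma conj_subdiff g y : feas y -> subdiff Rf y g -> subdiff (conjugate Rf) g y.
Proof. intros hy hs. exists (dot g y - Rv y). split; [apply conj_val; auto|].
  intros h fh e. pose proof (conj_fin_ub h fh y e hy). rewrite dot_subr, !(dot_comm y). lra. Qed.

Lemma feas_subdiff_nonempty x : feas x -> exists g, subdiff Rf x g.
Proof. intro hx. destruct (Rv_att x) as [i [hi e]]. exists (a i). apply subdiff_iff; auto.
  intros y hy. pose proof (ell_ge y i hi). rewrite dot_subr. rewrite e. unfold ell in *. lra. Qed.

Lemma dom_subdiff_Rf : dom_subdiff Rf = edom Rf.
Proof. apply functional_extensionality; intro x. apply propositional_extensionality. rewrite edom_feas. split.
  - intros [g [fx [e _]]]. apply Rf_fin_iff in e; tauto.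
  - intro hx. destruct (feas_subdiff_nonempty x hx) as [g hg]. exists g; auto. Qed.

Lemma dom_subdiff_conj g : dom_subdiff (conjugate Rf) g <-> exists x, feas x /\ subdiff Rf x g.
Proof. split.
  - intros [y hy]. apply conj_subdiff_inv in hy. eauto.
  - intros [x [hx hs]]. exists x. apply conj_subdiff; auto. Qed.

Lemma M_I_act I x0 : M_I k m a alpha I x0 -> I = act x0.
Proof. intro h. apply M_I_iff in h as [_ h]. apply functional_extensionality; intro i.
  apply propositional_extensionality; auto. Qed.

Lemma M_act_iff x0 x : M_I k m a alpha (act x0) x <-> feas x /\ act x = act x0.
Proof. rewrite M_I_iff. split.
  - intros [hf h]. split; auto. apply functional_extensionality; intro i.
    apply propositional_extensionality; symmetry; auto.
  - intros [hf h]. split; auto. rewrite h; tauto. Qed.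

Lemma Lmax_act_nonempty x : Lmax (act x) <> nil.
Proof. destruct (Rv_att x) as [i [hi e]]. intro h.
  assert (In i (Lmax (act x))) by (apply Lmax_In; split; auto; left; split; auto).
  rewrite h in H; contradiction. Qed.

Definition FI (I : nat -> Prop) : vset N := fun x => feas x /\ forall i, I i -> act x i.

Lemma wsum_sub l F G L : wsum l (fun i => F i - G i) L = wsum l F L - wsum l G L.
Proof. unfold wsum. induction L; simpl; [ring|]. rewrite IHL; ring. Qed.
Lemma wsum_const l c L : wsum l (fun _ => c) L = c * sumR (map l L).
Proof. unfold wsum. induction L; simpl; [ring|]. rewrite IHL; ring. Qed.

Lemma wsum_nonneg l F L : (forall i, 0 <= l i) -> (forall i, In i L -> 0 <= F i) -> 0 <= wsum l F L.
Proof. intros h1 h2. unfold wsum. apply sumR_map_nonneg. intros i hi. apply Rmult_le_pos; auto. Qed.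

Lemma wsum_zero_pos l F L : (forall i, In i L -> 0 < l i) -> (forall i, In i L -> 0 <= F i) ->
  wsum l F L <= 0 -> forall i, In i L -> F i = 0.
Proof. intros h1 h2 h3 i hi. destruct (h2 i hi) as [hp|]; auto. exfalso.
  assert (0 < wsum l F L).
  { unfold wsum. rewrite <- (sumR_map_zero L). apply sumR_map_lt.
    - intros j hj. apply Rmult_le_pos; [left|]; auto.
    - exists i. split; auto. apply Rmult_lt_0_compat; auto. }
  lra. Qed.

Lemma wsum_zero_all l F L : (forall i, In i L -> F i = 0) -> wsum l F L = 0.
Proof. intro h. unfold wsum. rewrite (sumR_map_ext _ (fun _ => 0)). apply sumR_map_zero.
  intros i hi. rewrite h; auto; ring. Qed.

Section PIconj.
Variables (x0 : vec N) (hx0 : feas x0).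
Variables (g : vec N) (lam mu : nat -> R).
Hypotheses (hl : forall i, 0 <= lam i) (hm : forall i, 0 <= mu i)
  (pl : forall i, In i (Lmax (act x0)) -> 0 < lam i) (pm : forall i, In i (Lfeas (act x0)) -> 0 < mu i)
  (sl : sumR (map lam (Lmax (act x0))) = 1)
  (eg : g = vadd (lincomb_idx lam a (Lmax (act x0))) (lincomb_idx mu a (Lfeas (act x0)))).

Definition Phi y := wsum lam (fun i => Rv y - ell i y) (Lmax (act x0)) +
  wsum mu (fun j => alpha j - dot (a j) y) (Lfeas (act x0)).
Definition Cst := wsum lam alpha (Lmax (act x0)) + wsum mu alpha (Lfeas (act x0)).

Lemma Phi_id y : Rv y - dot g y = Phi y - Cst.
Proof. unfold Phi, Cst. rewrite eg, dot_addl, !lincomb_dot. unfold ell.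
  rewrite (wsum_ext lam lam (fun i => Rv y - (dot (a i) y - alpha i)) (fun i => (Rv y - dot (a i) y) - - alpha i)) by (intros; ring).
  rewrite !wsum_sub, wsum_const, sl.
  rewrite (wsum_ext lam lam (fun i => - alpha i) (fun i => 0 - alpha i)) by (intros; ring).
  rewrite wsum_sub. rewrite (wsum_zero_all lam (fun _ => 0)) by auto. ring. Qed.

Lemma Phi_nonneg y : feas y -> 0 <= Phi y.
Proof. intro hy. unfold Phi. apply Rplus_le_le_0_compat; apply wsum_nonneg; auto.
  - intros i hi. apply Lmax_In in hi as [_ hi]. pose proof (ell_ge y i hi). lra.
  - intros j hj. apply Lfeas_In in hj as [_ hj]. specialize (hy j hj). lra. Qed.

Lemma Phi_zero_act y : feas y -> Phi y <= 0 -> forall i, act x0 i -> act y i.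
Proof. intros hy hp i hi. unfold Phi in hp.
  assert (h1 : 0 <= wsum lam (fun i => Rv y - ell i y) (Lmax (act x0))).
  { apply wsum_nonneg; auto. intros j hj. apply Lmax_In in hj as [_ hj]. pose proof (ell_ge y j hj). lra. }
  assert (h2 : 0 <= wsum mu (fun j => alpha j - dot (a j) y) (Lfeas (act x0))).
  { apply wsum_nonneg; auto. intros j hj. apply Lfeas_In in hj as [_ hj]. specialize (hy j hj). lra. }
  pose proof (act_range x0 i hi).
  destruct (Compare_dec.le_lt_dec i k).
  - left. split; [lia|].
    assert (In i (Lmax (act x0))) by (apply Lmax_In; split; auto; lia).
    pose proof (wsum_zero_pos lam (fun i => Rv y - ell i y) _ pl) as hz.
    assert (Rv y - ell i y = 0).
    { apply hz; auto. intros j hj. apply Lmax_In in hj as [_ hj]. pose proof (ell_ge y j hj). lra. lra. }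
    lra.
  - right. split; [lia|].
    assert (In i (Lfeas (act x0))) by (apply Lfeas_In; split; auto; lia).
    pose proof (wsum_zero_pos mu (fun j => alpha j - dot (a j) y) _ pm) as hz.
    assert (alpha i - dot (a i) y = 0).
    { apply hz; auto. intros j hj. apply Lfeas_In in hj as [_ hj]. specialize (hy j hj). lra. lra. }
    lra. Qed.

Lemma Phi_act_zero y : feas y -> (forall i, act x0 i -> act y i) -> Phi y = 0.
Proof. intros hy ha. unfold Phi. rewrite !wsum_zero_all. ring.
  - intros j hj. apply Lfeas_In in hj as [hj hr]. destruct (ha j hj) as [[h1 _]|[_ h2]].
    + lia.
    + lra.
  - intros j hj. apply Lmax_In in hj as [hj hr]. destruct (ha j hj) as [[_ h2]|[h1 _]].
    + lra.
    + lia.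
Qed.

Lemma PI_conj_iff y : subdiff (conjugate Rf) g y <-> FI (act x0) y.
Proof. split.
  - intro h. apply conj_subdiff_inv in h as [hy hs]. split; auto.
    apply Phi_zero_act; auto. rewrite subdiff_iff in hs by auto. specialize (hs x0 hx0).
    rewrite dot_subr in hs. pose proof (Phi_id y). pose proof (Phi_id x0).
    rewrite (Phi_act_zero x0) in H0 by auto. lra.
  - intros [hy ha]. apply conj_subdiff; auto. apply subdiff_iff; auto. intros z hz.
    pose proof (Phi_id y). pose proof (Phi_id z). pose proof (Phi_nonneg z hz).
    rewrite (Phi_act_zero y) in H by auto. rewrite dot_subr. lra. Qed.
End PIconj.

Lemma aff_affine_gen (S : vset N) (c : vec N) e (l : list (R * vec N)) :
  (forall w, S w -> dot c w + e = 0) -> (forall p, In p l -> S (snd p)) ->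
  dot c (lincomb l) + e * sumR (map fst l) = 0.
Proof. intros hS. induction l as [|[r w] l IH]; intro hl.
  - simpl. rewrite dot_zeror. ring.
  - change (dot c (vadd (vscale r w) (lincomb l)) + e * (r + sumR (map fst l)) = 0).
    rewrite dot_addr, dot_scaler. pose proof (hS w (hl (r, w) (or_introl eq_refl))).
    pose proof (IH (fun p h => hl p (or_intror h))). simpl in H. nra. Qed.

Lemma aff_affine (S : vset N) (c : vec N) e y :
  (forall w, S w -> dot c w + e = 0) -> aff S y -> dot c y + e = 0.
Proof. intros hS [l [hl [hs ->]]]. pose proof (aff_affine_gen S c e l hS hl). rewrite hs in H. lra. Qed.

Lemma near_lt (c x : vec N) e : dot c x + e < 0 ->
  exists d, 0 < d /\ forall y, vnorm (vsub y x) < d -> dot c y + e < 0.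
Proof. intro h. set (eta := - (dot c x + e)). exists (eta / (vnorm c + 1)).
  pose proof (vnorm_pos c). split; [apply Rdiv_lt_0_compat; unfold eta; lra|].
  intros y hy. pose proof (dot_small c (vsub y x) _ hy). rewrite dot_subr in H0.
  assert (vnorm c * (eta / (vnorm c + 1)) < eta).
  { unfold Rdiv. apply Rmult_lt_reg_r with (vnorm c + 1); [lra|].
    rewrite Rmult_assoc, Rmult_assoc, Rinv_l by lra. unfold eta; nra. }
  pose proof (Rle_abs (dot c y - dot c x)). unfold eta in *. lra. Qed.

Lemma near_list {A} (L : list A) (x : vec N) (Q : A -> vec N -> Prop) :
  (forall i, In i L -> exists d, 0 < d /\ forall y, vnorm (vsub y x) < d -> Q i y) ->
  exists d, 0 < d /\ forall y, vnorm (vsub y x) < d -> forall i, In i L -> Q i y.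
Proof. intro H. destruct (small_t_list L (fun i t => forall y, vnorm (vsub y x) < t -> Q i y)) as [d [hd Hd]].
  - intros i hi. destruct (H i hi) as [d [hd Hd]]. exists d; split; auto. intros t ht y hy. apply Hd; lra.
  - exists (d / 2). split; [lra|]. intros y hy i hi. apply (Hd (d / 2)); auto; lra. Qed.

Lemma closed_le (S : vset N) (c x : vec N) e : closure S x -> (forall y, S y -> dot c y + e <= 0) -> dot c x + e <= 0.
Proof. intros hc hS. apply Rnot_lt_le. intro hlt.
  destruct (near_lt (vscale (-1) c) x (- e)) as [d [hd Hd]].
  { rewrite dot_scalel. lra. }
  destruct (hc d hd) as [y [hy hyx]]. specialize (Hd y hyx). rewrite dot_scalel in Hd. specialize (hS y hy). lra. Qed.

Lemma ell_line2 i (x x0 : vec N) t : ell i (vadd x (vscale t (vsub x x0))) = ell i x + t * (ell i x - ell i x0).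
Proof. rewrite ell_line, dot_subr. unfold ell. ring. Qed.

Lemma ell_seg i (x w : vec N) t : ell i (vadd x (vscale t (vsub w x))) = (1 - t) * ell i x + t * ell i w.
Proof. rewrite ell_line, dot_subr. unfold ell. ring. Qed.

Lemma Rv_eq_of (x : vec N) i : (1 <= i <= k)%nat -> (forall j, (1 <= j <= k)%nat -> ell j x <= ell i x) -> Rv x = ell i x.
Proof. intros hi h. apply Rle_antisym. apply Rv_le; auto. apply ell_ge; auto. Qed.

Lemma act_max_att (x : vec N) : exists i0, (1 <= i0 <= k)%nat /\ act x i0 /\ Rv x = ell i0 x.
Proof. destruct (Rv_att x) as [i [hi e]]. exists i. split; [auto|split; [left; split; auto|auto]]. Qed.

Lemma FI_self x0 : feas x0 -> FI (act x0) x0.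
Proof. intros; split; auto. Qed.

Lemma M_ri_FI x0 x : feas x -> act x = act x0 -> ri (FI (act x0)) x.
Proof.
  intros hx hax. split; [split; auto; rewrite hax; auto|].
  destruct (act_max_att x) as [i0 [hi0 [hai0 ei0]]].
  destruct (near_list (seq 1 m) x (fun j y =>
     ((1 <= j <= k)%nat -> ~ act x0 j -> ell j y < ell i0 y) /\
     ((k + 1 <= j <= m)%nat -> ~ act x0 j -> dot (a j) y - alpha j < 0))) as [d [hd Hd]].
  { intros j hj. apply in_seq in hj. destruct (classic (act x0 j)) as [ha|hna].
    - exists 1; split; [lra|]. intros; split; intros; contradiction.
    - destruct (Compare_dec.le_lt_dec j k).
      + destruct (near_lt (vsub (a j) (a i0)) x (alpha i0 - alpha j)) as [dd [hdd Hdd]].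
        { rewrite dot_subl. assert (ell j x < ell i0 x).
          { pose proof (ell_ge x j ltac:(lia)). rewrite <- ei0. destruct H; auto. exfalso; apply hna.
            rewrite <- hax. left; split; [lia|auto]. }
          unfold ell in H; lra. }
        exists dd; split; auto. intros y hy; split; [|lia]. intros _ _. specialize (Hdd y hy).
        rewrite dot_subl in Hdd. unfold ell; lra.
      + destruct (near_lt (a j) x (- alpha j)) as [dd [hdd Hdd]].
        { assert (dot (a j) x - alpha j < 0).
          { pose proof (hx j ltac:(lia)). destruct H; auto. exfalso; apply hna.
            rewrite <- hax. right; split; [lia|lra]. }
          lra. }
        exists dd; split; auto. intros y hy; split; [lia|]. intros _ _. specialize (Hdd y hy). lra. }
  exists d; split; auto. intros y hy hyd.
  assert (hmaxeq : forall i, (1 <= i <= k)%nat -> act x0 i -> ell i y = ell i0 y).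
  { intros i hi hai.
    pose proof (aff_affine (FI (act x0)) (vsub (a i) (a i0)) (alpha i0 - alpha i) y) as hh.
    rewrite dot_subl in hh. unfold ell. enough (dot (a i) y - dot (a i0) y + (alpha i0 - alpha i) = 0) by lra.
    apply hh; auto. intros w [hw haw]. rewrite dot_subl.
    destruct (haw i hai) as [[_ e1]|[hr _]]; [|lia].
    destruct (haw i0 (ltac:(rewrite <- hax; auto))) as [[_ e2]|[hr _]]; [|lia].
    unfold ell in *. lra. }
  assert (hfeq : forall i, (k + 1 <= i <= m)%nat -> act x0 i -> dot (a i) y = alpha i).
  { intros i hi hai.
    pose proof (aff_affine (FI (act x0)) (a i) (- alpha i) y) as hh.
    enough (dot (a i) y + - alpha i = 0) by lra. apply hh; auto. intros w [hw haw].
    destruct (haw i hai) as [[hr _]|[_ e1]]; [lia|]. lra. }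
  assert (hmaxle : forall j, (1 <= j <= k)%nat -> ell j y <= ell i0 y).
  { intros j hj. destruct (classic (act x0 j)).
    - rewrite hmaxeq; auto; lra.
    - left. apply (Hd y hyd j); auto. apply in_seq; lia. }
  assert (hRy : Rv y = ell i0 y) by (apply Rv_eq_of; auto).
  split.
  - intros j hj. destruct (classic (act x0 j)).
    + rewrite hfeq; auto. lra.
    + left. apply (Hd y hyd j); auto. apply in_seq; lia.
  - intros i hai. destruct (act_range x0 i hai) as [h1 h2]. destruct (Compare_dec.le_lt_dec i k).
    + left. split; [lia|]. rewrite hRy, hmaxeq; auto; lia.
    + right. split; [lia|]. apply hfeq; auto; lia.
Qed.

Lemma ri_FI_M x0 x : feas x0 -> ri (FI (act x0)) x -> feas x /\ act x = act x0.
Proof.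
  intros hx0 [[hx hax] [eps [heps H]]]. split; auto.
  apply functional_extensionality; intro j. apply propositional_extensionality. split; [|auto].
  intro hj. apply NNPP. intro hnj.
  set (t := eps / (2 * (vnorm (vsub x x0) + 1))).
  pose proof (vnorm_pos (vsub x x0)).
  assert (ht : 0 < t) by (unfold t; apply Rdiv_lt_0_compat; lra).
  set (x' := vadd x (vscale t (vsub x x0))).
  assert (hx' : FI (act x0) x').
  { apply H. apply aff_two; [split; auto|apply FI_self; auto].
    unfold x'. rewrite vsub_line, vnorm_scale, Rabs_right by lra. unfold t.
    apply small_step; auto. }
  destruct hx' as [hfx' hax'].
  destruct (act_max_att x0) as [i0 [hi0 [hai0 ei0]]].
  destruct (act_range x j hj) as [hj1 hj2].
  destruct (Compare_dec.le_lt_dec j k).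
  - destruct hj as [[_ ej]|[hr _]]; [|lia].
    assert (e0 : Rv x = ell i0 x) by (destruct (hax i0 hai0) as [[_ e]|[hr _]]; [auto|lia]).
    assert (e0' : Rv x' = ell i0 x') by (destruct (hax' i0 hai0) as [[_ e]|[hr _]]; [auto|lia]).
    assert (hjx0 : ell j x0 < ell i0 x0).
    { pose proof (ell_ge x0 j ltac:(lia)) as hle. rewrite <- ei0. destruct hle as [h|h]; auto. exfalso; apply hnj.
      left; split; [lia|auto]. }
    pose proof (ell_ge x' j ltac:(lia)).
    unfold x' in *. rewrite !ell_line2 in *. nra.
  - destruct hj as [[hr _]|[_ ej]]; [lia|].
    assert (hjx0 : dot (a j) x0 - alpha j < 0).
    { pose proof (hx0 j ltac:(lia)) as hle. destruct hle; auto. exfalso; apply hnj. right; split; [lia|lra]. }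
    pose proof (hfx' j ltac:(lia)) as hle. unfold x' in hle. 
    change (ell j (vadd x (vscale t (vsub x x0))) <= 0) in hle. rewrite ell_line2 in hle.
    unfold ell in *. nra.
Qed.

Lemma cl_M_FI x0 x : feas x0 -> closure (M_I k m a alpha (act x0)) x -> FI (act x0) x.
Proof.
  intros hx0 hc.
  assert (hS : forall y, M_I k m a alpha (act x0) y -> feas y /\ act y = act x0) by (intro; apply M_act_iff).
  split.
  - intros j hj. apply (closed_le _ (a j) x (- alpha j) hc). intros y hy. apply hS in hy as [hy _].
    specialize (hy j hj). lra.
  - intros i hai. destruct (act_range x0 i hai) as [h1 h2]. destruct (Compare_dec.le_lt_dec i k).
    + left; split; [lia|]. symmetry. apply Rv_eq_of; [lia|]. intros j hj.
      pose proof (closed_le _ (vsub (a j) (a i)) x (alpha i - alpha j) hc) as hh.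
      rewrite dot_subl in hh. unfold ell.
      enough (dot (a j) x - dot (a i) x + (alpha i - alpha j) <= 0) by lra.
      apply hh. intros y hy. apply hS in hy as [hy hay]. rewrite dot_subl.
      rewrite <- hay in hai. destruct hai as [[_ e]|[hr _]]; [|lia].
      pose proof (ell_ge y j hj). unfold ell in *; lra.
    + right; split; [lia|]. apply Rle_antisym.
      * enough (dot (a i) x + - alpha i <= 0) by lra. apply (closed_le _ (a i) x (- alpha i) hc).
        intros y hy. apply hS in hy as [hy _]. specialize (hy i ltac:(lia)). lra.
      * enough (dot (vscale (-1) (a i)) x + alpha i <= 0) by (rewrite dot_scalel in H; lra).
        apply (closed_le _ _ x (alpha i) hc). intros y hy. apply hS in hy as [hy hay].
        rewrite <- hay in hai. destruct hai as [[hr _]|[_ e]]; [lia|]. rewrite dot_scalel. lra.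
Qed.

Lemma FI_cl_M x0 x : feas x0 -> FI (act x0) x -> closure (M_I k m a alpha (act x0)) x.
Proof.
  intros hx0 [hx hax] eps heps.
  destruct (act_max_att x0) as [i0 [hi0 [hai0 ei0]]].
  set (t := Rmin 1 (eps / (2 * (vnorm (vsub x0 x) + 1)))).
  pose proof (vnorm_pos (vsub x0 x)).
  assert (ht : 0 < t) by (unfold t; apply Rmin_pos; [lra|apply Rdiv_lt_0_compat; lra]).
  assert (ht1 : t <= 1) by apply Rmin_l.
  set (z := vadd x (vscale t (vsub x0 x))). exists z. split.
  - apply M_act_iff.
    assert (hRx : Rv x = ell i0 x) by (destruct (hax i0 hai0) as [[_ e]|[hr _]]; [auto|lia]).
    assert (hz_max : forall j, (1 <= j <= k)%nat -> ell j z <= ell i0 z).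
    { intros j hj. unfold z. rewrite !ell_seg. pose proof (ell_ge x j hj). pose proof (ell_ge x0 j hj). nra. }
    assert (hRz : Rv z = ell i0 z) by (apply Rv_eq_of; auto).
    assert (hzf : feas z).
    { intros j hj. change (ell j z <= 0). unfold z. rewrite ell_seg. specialize (hx j hj). specialize (hx0 j hj).
      change (ell j x <= 0) in hx. change (ell j x0 <= 0) in hx0. nra. }
    split; auto. apply functional_extensionality; intro j. apply propositional_extensionality. split.
    + intro hj. apply NNPP; intro hnj. destruct (act_range z j hj) as [hj1 hj2].
      destruct (Compare_dec.le_lt_dec j k).
      * destruct hj as [[_ e]|[hr _]]; [|lia].
        assert (ell j x0 < ell i0 x0).
        { pose proof (ell_ge x0 j ltac:(lia)) as hle. rewrite <- ei0. destruct hle; auto. exfalso; apply hnj. left; split; [lia|auto]. }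
        pose proof (ell_ge x j ltac:(lia)). rewrite hRz in e. unfold z in e. rewrite !ell_seg in e. nra.
      * destruct hj as [[hr _]|[_ e]]; [lia|].
        assert (ell j x0 < 0).
        { pose proof (hx0 j ltac:(lia)) as hle. change (ell j x0 <= 0) in hle. destruct hle as [hle|hle]; auto. exfalso; apply hnj. right; split; [lia|unfold ell in hle; lra]. }
        pose proof (hx j ltac:(lia)) as hle2. change (ell j x <= 0) in hle2.
        assert (hz0 : ell j z = 0) by (unfold ell; lra). unfold z in hz0. rewrite ell_seg in hz0. nra.
    + intro hj. destruct (act_range x0 j hj) as [hj1 hj2]. pose proof (hax j hj) as hxj.
      destruct (Compare_dec.le_lt_dec j k).
      * left; split; [lia|]. destruct hxj as [[_ e1]|[hr _]]; [|lia]. destruct hj as [[_ e2]|[hr _]]; [|lia].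
        symmetry. rewrite hRz. unfold z. rewrite !ell_seg. rewrite e1, e2, hRx, ei0. ring.
      * right; split; [lia|]. destruct hxj as [[hr _]|[_ e1]]; [lia|]. destruct hj as [[hr _]|[_ e2]]; [lia|].
        unfold z. rewrite dot_addr, dot_scaler, dot_subr. rewrite e1, e2. ring.
  - unfold z. rewrite vsub_line, vnorm_scale, Rabs_right by lra.
    assert (t <= eps / (2 * (vnorm (vsub x0 x) + 1))) by apply Rmin_r.
    pose proof (small_step (vnorm (vsub x0 x)) eps H heps). nra.
Qed.

Lemma Mst_PI x0 : Mst_I k m a (act x0) = PI (act x0).
Proof. unfold Mst_I, PI. apply Mst_SComb.
  - apply Lmax_ND. - apply Lfeas_ND. - apply L_disj. - apply Lmax_act_nonempty.
  - rewrite Lfeas_In. lia.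
  - intro i; rewrite Lmax_In; tauto. - intro i; rewrite Lfeas_In; tauto. Qed.

Lemma ri_DI x0 : ri (DI (act x0)) = PI (act x0).
Proof. apply ri_Comb_eq. apply Lmax_ND. apply Lfeas_ND. apply L_disj. apply Lmax_act_nonempty. Qed.

Lemma PI_nonempty x0 : exists g, PI (act x0) g.
Proof. eexists. apply SComb_bary. apply Lmax_act_nonempty. Qed.

Lemma PI_DI I g : PI I g -> DI I g.
Proof. apply SComb_Comb. Qed.

Lemma set_ext (S T : vset N) : (forall x, S x <-> T x) -> S = T.
Proof. intro h. apply functional_extensionality; intro x. apply propositional_extensionality; auto. Qed.

Lemma Jmap_M x0 : feas x0 -> Jmap Rf (M_I k m a alpha (act x0)) = PI (act x0).
Proof. intro hx0. apply set_ext; intro g. split.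
  - intros [x [hx hr]]. apply M_act_iff in hx as [hx hax]. rewrite subdiff_eq, hax, ri_DI in hr by auto. auto.
  - intro hg. exists x0. split; [apply M_act_iff; auto|]. rewrite subdiff_eq, ri_DI by auto. auto. Qed.

Lemma conj_PI_eq x0 g : feas x0 -> PI (act x0) g -> subdiff (conjugate Rf) g = FI (act x0).
Proof. intros hx0 (lam & mu & hl & hm & pl & pm & sl & eg). apply set_ext; intro y.
  apply (PI_conj_iff x0 hx0 g lam mu); auto. Qed.

Lemma ri_FI_eq x0 : feas x0 -> ri (FI (act x0)) = M_I k m a alpha (act x0).
Proof. intro hx0. apply set_ext; intro x. rewrite M_act_iff. split.
  - apply ri_FI_M; auto. - intros [h1 h2]. apply M_ri_FI; auto. Qed.

Lemma Jmap_PI x0 : feas x0 -> Jmap (conjugate Rf) (PI (act x0)) = M_I k m a alpha (act x0).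
Proof. intro hx0. apply set_ext; intro x. split.
  - intros [g [hg hr]]. rewrite (conj_PI_eq x0 g), ri_FI_eq in hr; auto.
  - intro hx. destruct (PI_nonempty x0) as [g hg]. exists g. split; auto.
    rewrite (conj_PI_eq x0 g), ri_FI_eq; auto. Qed.

Lemma cl_M_eq x0 : feas x0 -> closure (M_I k m a alpha (act x0)) = FI (act x0).
Proof. intro hx0. apply set_ext; intro x. split. apply cl_M_FI; auto. apply FI_cl_M; auto. Qed.

Lemma cl_PI_eq x0 : feas x0 -> closure (PI (act x0)) = DI (act x0).
Proof. intro hx0. apply set_ext; intro g. split.
  - intro hc. rewrite <- subdiff_eq by auto. apply subdiff_iff; auto. intros y hy.
    enough (dot (vsub y x0) g + (Rv x0 - Rv y) <= 0) by (rewrite dot_comm in H; lra).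
    apply (closed_le _ _ g _ hc). intros h hh. apply PI_DI in hh. rewrite <- subdiff_eq in hh by auto.
    rewrite subdiff_iff in hh by auto. specialize (hh y hy). rewrite dot_comm. lra.
  - intro hg. apply Comb_cl_SComb; auto. apply Lmax_act_nonempty. Qed.

(* ---------- strict complementarity: covering of the dual domain ---------- *)
Definition cnt (z : vec N) : nat := length (filter (fun i => inb (act z i)) (seq 1 m)).


Lemma cnt_lt z z' j : (forall i, act z' i -> act z i) -> act z j -> ~ act z' j -> (cnt z' < cnt z)%nat.
Proof. intros h hj hnj. unfold cnt. apply filter_len_lt.
  - intros i _ e. apply inb_true. apply h. apply inb_true; auto.
  - exists j. split; [apply in_seq; pose proof (act_range z j hj); lia|].
    split.
    + unfold inb; destruct excluded_middle_informative; [contradiction|reflexivity].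
    + apply inb_true; auto. Qed.

Lemma min_cnt (P : vec N -> Prop) z0 : P z0 -> exists z, P z /\ forall z', P z' -> (cnt z <= cnt z')%nat.
Proof.
  intro h0. assert (H : forall n z, P z -> (cnt z <= n)%nat -> exists z, P z /\ forall z', P z' -> (cnt z <= cnt z')%nat).
  { induction n as [|n IH]; intros z hz hn.
    - exists z. split; auto. intros; lia.
    - destruct (classic (exists z', P z' /\ (cnt z' < cnt z)%nat)) as [[z' [hz' hlt]]|hno].
      + apply (IH z'); auto. lia.
      + exists z. split; auto. intros z' hz'. apply Nat.nlt_ge. intro hlt. apply hno; eauto. }
  apply (H (cnt z0) z0); auto. Qed.

Lemma no_descent z g d j : feas z -> subdiff Rf z g -> act z j ->
  (forall i, act z i -> ((1 <= i <= k)%nat -> dot (a i) d <= dot g d) /\ ((k + 1 <= i <= m)%nat -> dot (a i) d <= 0)) ->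
  ((1 <= j <= k)%nat -> dot (a j) d < dot g d) -> ((k + 1 <= j <= m)%nat -> dot (a j) d < 0) ->
  exists z', feas z' /\ subdiff Rf z' g /\ (forall i, act z' i -> act z i) /\ ~ act z' j.
Proof.
  intros hz hs hj hd hdj1 hdj2. set (gd := dot g d).
  set (Sx := fun i => act z i /\ i <> j).
  destruct (small_t_list (seq 1 m) (fun i t =>
      ((i <= k)%nat -> ell i (vadd z (vscale t d)) <= Rv z + t * gd) /\
      ((i <= k)%nat -> ~ Sx i -> ell i (vadd z (vscale t d)) < Rv z + t * gd) /\
      ((k + 1 <= i <= m)%nat -> ell i (vadd z (vscale t d)) <= 0) /\
      ((k + 1 <= i <= m)%nat -> ~ Sx i -> ell i (vadd z (vscale t d)) < 0))) as [t0 [ht0 Ht0]].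
  { intros i hi. apply in_seq in hi.
    destruct (classic (act z i)) as [ha|hna].
    - exists 1. split; [lra|]. intros t ht. rewrite !ell_line. pose proof (act_range z i ha).
      destruct (hd i ha) as [hd1 hd2].
      destruct (Compare_dec.le_lt_dec i k).
      + destruct ha as [[_ e]|[hr _]]; [|lia]. rewrite e.
        specialize (hd1 ltac:(lia)). fold gd in hd1.
        split; [intros; nra|]. split; [|split; intros; lia].
        intros _ hn. assert (i = j) by (apply NNPP; intro; apply hn; split; auto; left; split; [lia|auto]). subst.
        specialize (hdj1 ltac:(lia)). fold gd in hdj1. nra.
      + destruct ha as [[hr _]|[_ e]]; [lia|].
        specialize (hd2 ltac:(lia)).
        split; [intros; lia|]. split; [intros; lia|]. unfold ell. rewrite e.
        split; [intros; nra|].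
        intros _ hn. assert (i = j) by (apply NNPP; intro; apply hn; split; auto; right; split; [lia|auto]). subst.
        specialize (hdj2 ltac:(lia)). nra.
    - destruct (Compare_dec.le_lt_dec i k).
      + assert (ell i z < Rv z).
        { pose proof (ell_ge z i ltac:(lia)) as hle. destruct hle; auto. exfalso; apply hna; left; split; [lia|auto]. }
        destruct (small_lt (ell i z - Rv z) (dot (a i) d - gd)) as [dd [hdd Hdd]]; [lra|].
        exists dd; split; auto. intros t ht. rewrite !ell_line. specialize (Hdd t ht).
        split; [intros; lra|]. split; [intros; lra|]. split; intros; lia.
      + assert (ell i z < 0).
        { pose proof (hz i ltac:(lia)) as hle. destruct hle; auto. exfalso; apply hna; right; split; [lia|]. unfold ell in H; lra. }
        destruct (small_lt (ell i z) (dot (a i) d)) as [dd [hdd Hdd]]; [lra|].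
        exists dd; split; auto. intros t ht. rewrite !ell_line. specialize (Hdd t ht).
        split; [intros; lia|]. split; [intros; lia|]. split; intros; lra. }
  set (t := t0 / 2). assert (ht : 0 < t < t0) by (unfold t; lra).
  set (z' := vadd z (vscale t d)).
  assert (hP : forall i, (1 <= i <= m)%nat -> _) by (intros i hi; exact (Ht0 t ht i ltac:(apply in_seq; lia))).
  assert (hz' : feas z').
  { intros i hi. destruct (hP i ltac:(lia)) as [_ [_ [h _]]]. apply h; auto. }
  assert (hRle : Rv z' <= Rv z + t * gd).
  { apply Rv_le. intros i hi. destruct (hP i ltac:(lia)) as [h _]. apply h; lia. }
  assert (hRge : Rv z + t * gd <= Rv z').
  { rewrite subdiff_iff in hs by auto. specialize (hs z' hz'). unfold z' in hs. rewrite vsub_line, dot_scaler in hs. fold gd in hs. fold z' in hs. lra. }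
  assert (hRz' : Rv z' = Rv z + t * gd) by lra.
  exists z'. split; auto. split; [|split].
  - rewrite subdiff_iff in * by auto. intros y hy. specialize (hs y hy).
    rewrite dot_subr in *. unfold z' at 2. rewrite dot_addr, dot_scaler. fold gd. lra.
  - intros i hai. apply NNPP. intro hn. assert (hnS : ~ Sx i) by (intros [h _]; auto).
    pose proof (act_range z' i hai). destruct (hP i ltac:(lia)) as [_ [h1 [_ h2]]].
    destruct (Compare_dec.le_lt_dec i k).
    + destruct hai as [[_ e]|[hr _]]; [|lia]. specialize (h1 ltac:(lia) hnS). fold z' in h1. lra.
    + destruct hai as [[hr _]|[_ e]]; [lia|]. specialize (h2 ltac:(lia) hnS). fold z' in h2. unfold ell in h2; lra.
  - intro hai. assert (hnS : ~ Sx j) by (intros [_ h]; auto).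
    pose proof (act_range z' j hai). destruct (hP j ltac:(lia)) as [_ [h1 [_ h2]]].
    destruct (Compare_dec.le_lt_dec j k).
    + destruct hai as [[_ e]|[hr _]]; [|lia]. specialize (h1 ltac:(lia) hnS). fold z' in h1. lra.
    + destruct hai as [[hr _]|[_ e]]; [lia|]. specialize (h2 ltac:(lia) hnS). fold z' in h2. unfold ell in h2; lra.
Qed.

Lemma dual_cover g x : feas x -> subdiff Rf x g -> exists z, feas z /\ PI (act z) g.
Proof.
  intros hx hsx.
  destruct (min_cnt (fun z => feas z /\ subdiff Rf z g) x (conj hx hsx)) as [z [[hz hsz] hmin]].
  exists z. split; auto.
  set (L1 := Lmax (act z)). set (L2 := Lfeas (act z)). set (L := L1 ++ L2).
  assert (hnd : NoDup L) by (apply NoDup_app_disj; [apply Lmax_ND|apply Lfeas_ND|apply L_disj]).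
  assert (hdisj : forall i, In i L1 -> ~ In i L2) by apply L_disj.
  set (b := hfam L1 a a).
  set (Rep := fun kap : nat -> R => (forall i, 0 <= kap i) /\ ext g 1 = lincomb_idx kap b L).
  destruct (subdiff_DI z g hz hsz) as (lam & mu & hl & hm & sl & eg).
  set (k0 := fun i => if inb (In i L1) then lam i else mu i).
  assert (hk0 : Rep k0).
  { split. intro i; unfold k0; destruct inb; auto.
    unfold L, b. rewrite lincomb_hfam by auto.
    rewrite (lincomb_ext k0 lam a L1) by (intros i hi; unfold k0; rewrite inb_In_true; auto).
    rewrite (lincomb_ext k0 mu a L2) by (intros i hi; unfold k0; rewrite inb_In_false; auto; intro h; apply (hdisj i); auto).
    rewrite (sumR_map_ext k0 lam) by (intros i hi; unfold k0; rewrite inb_In_true; auto).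
    fold L1 L2 in sl, eg. rewrite sl, <- eg. reflexivity. }
  assert (hone : forall j, In j L -> exists kap, Rep kap /\ 0 < kap j).
  { intros j hj.
    assert (hnd0 : NoDup (0%nat :: nil)) by (constructor; [intros []|constructor]).
    destruct (farkas2 L (0%nat :: nil) b (fun _ => ext g 1) (vscale (-1) (b j)) hnd hnd0)
      as [[nu [tau' [hnu enu]]]|[dh [hd1 [hd2 hd3]]]].
    - set (tau := tau' 0%nat).
      assert (ebj : forall q, - b j q = wsum nu (fun i => b i q) L + tau * ext g 1 q).
      { intro q. assert (hq := f_equal (fun v => v q) enu). simpl in hq. unfold vadd, vscale, vzero in hq.
        rewrite lincomb_coord in hq. fold tau in hq. lra. }
      assert (htau : tau <= 0).
      { specialize (ebj Fin.F1).
        assert (wsum nu (fun i => b i Fin.F1) L = sumR (map nu L1)).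
        { assert (h := f_equal (fun v => v Fin.F1) (lincomb_hfam L1 L2 a a nu hdisj)). simpl in h.
          rewrite lincomb_coord in h. exact h. }
        rewrite H in ebj. change (ext g 1 Fin.F1) with 1 in ebj.
        assert (0 <= b j Fin.F1) by (unfold b, hfam; destruct inb; simpl; lra).
        assert (0 <= sumR (map nu L1)) by (apply sumR_map_nonneg; auto).
        lra. }
      exists (fun i => / (1 - tau) * (k0 i + nu i + (if Nat.eq_dec i j then 1 else 0))). split; [split|].
      + intro i. assert (0 < / (1 - tau)) by (apply Rinv_0_lt_compat; lra).
        destruct hk0 as [h0 _]. specialize (h0 i). specialize (hnu i). destruct Nat.eq_dec; nra.
      + apply vec_ext; intro q. rewrite lincomb_coord, wsum_lin3, wsum_delta by auto.
        destruct hk0 as [_ e0]. assert (hq := f_equal (fun v => v q) e0). simpl in hq. rewrite lincomb_coord in hq.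
        rewrite <- hq. specialize (ebj q). 
        assert (wsum nu (fun i => b i q) L = - b j q - tau * ext g 1 q) by lra. rewrite H.
        field. lra.
      + destruct hk0 as [h0 _]. specialize (h0 j). specialize (hnu j).
        destruct Nat.eq_dec; [|congruence]. assert (0 < / (1 - tau)) by (apply Rinv_0_lt_compat; lra). nra.
    - exfalso.
      set (s := dh Fin.F1). set (d := fun q => dh (Fin.FS q)).
      assert (hgd : s + dot g d = 0).
      { specialize (hd2 0%nat (or_introl eq_refl)). rewrite dot_ext in hd2. unfold s, d. lra. }
      assert (hb1 : forall i, In i L1 -> s + dot (a i) d <= 0).
      { intros i hi. specialize (hd1 i (in_or_app _ _ _ (or_introl hi))). unfold b in hd1.
        rewrite hfam_L1, dot_ext in hd1 by auto. unfold s, d. lra. }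
      assert (hb2 : forall i, In i L2 -> dot (a i) d <= 0).
      { intros i hi. specialize (hd1 i (in_or_app _ _ _ (or_intror hi))). unfold b in hd1.
        rewrite hfam_L2, dot_ext in hd1 by (intro h; apply (hdisj i); auto). unfold d. lra. }
      rewrite dot_scalel in hd3.
      assert (hjz : act z j).
      { apply in_app_iff in hj as [hj|hj]; [apply Lmax_In in hj|apply Lfeas_In in hj]; tauto. }
      destruct (no_descent z g d j hz hsz hjz) as [z' [hz' [hs' [hsub hnj]]]].
      + intros i hai. split.
        * intro hi. assert (In i L1) by (apply Lmax_In; auto). specialize (hb1 i H). lra.
        * intro hi. apply hb2. apply Lfeas_In; auto.
      + intro hj1. assert (hjL1 : In j L1) by (apply Lmax_In; auto). unfold b in hd3.
        rewrite hfam_L1, dot_ext in hd3 by auto. fold s d in hd3. lra.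
      + intro hj2. assert (hjL2 : In j L2) by (apply Lfeas_In; auto). unfold b in hd3.
        rewrite hfam_L2, dot_ext in hd3 by (intro h; apply (hdisj j); auto). fold s d in hd3. lra.
      + specialize (hmin z' (conj hz' hs')). pose proof (cnt_lt z z' j hsub hjz hnj). lia. }
  assert (hall : forall L', (forall j, In j L' -> In j L) -> exists kap, Rep kap /\ forall j, In j L' -> 0 < kap j).
  { induction L' as [|j L' IH]; intro hsub.
    - exists k0. split; auto. intros j [].
    - destruct IH as [k1 [[hk1 ek1] pk1]]; [intros; apply hsub; simpl; auto|].
      destruct (hone j (hsub j (or_introl eq_refl))) as [k2 [[hk2 ek2] pk2]].
      exists (fun i => / 2 * (k1 i + k2 i)). split; [split|].
      + intro i. specialize (hk1 i). specialize (hk2 i). lra.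
      + apply vec_ext; intro q. rewrite lincomb_coord, wsum_lin2'.
        assert (h1 := f_equal (fun v => v q) ek1). assert (h2 := f_equal (fun v => v q) ek2).
        simpl in h1, h2. rewrite lincomb_coord in h1, h2. rewrite <- h1, <- h2. field.
      + intros i [<-|hi]. { specialize (hk1 j). lra. } specialize (pk1 i hi). specialize (hk2 i). lra. }
  destruct (hall L (fun j h => h)) as [kap [[hk ek] pk]].
  unfold L, b in ek. rewrite lincomb_hfam in ek by auto. apply ext_eq in ek as [eg' es'].
  exists kap, kap. repeat split; auto.
  - intros i hi. apply pk. apply in_or_app; auto.
  - intros i hi. apply pk. apply in_or_app; auto.
Qed.

Definition actlist (x : vec N) := filter (fun i => inb (act x i)) (seq 1 m).
Lemma act_actlist x : act x = (fun i => In i (actlist x)).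
Proof. apply functional_extensionality; intro i. apply propositional_extensionality. unfold actlist.
  rewrite filter_In, in_seq, inb_true. split.
  - intro h. pose proof (act_range x i h). split; auto; lia.
  - tauto. Qed.

Lemma S_iff (M : vset N) : (exists I, (exists x, M_I k m a alpha I x) /\ M = M_I k m a alpha I) <->
  exists x0, feas x0 /\ M = M_I k m a alpha (act x0).
Proof. split.
  - intros [I [[x hx] ->]]. pose proof (M_I_act I x hx). subst I. exists x. split; auto.
    apply M_act_iff in hx; tauto.
  - intros [x0 [hx0 ->]]. exists (act x0). split; auto. exists x0. apply M_act_iff; auto. Qed.

Lemma Sst_iff (M : vset N) : (exists I, (exists x, M_I k m a alpha I x) /\ M = Mst_I k m a I) <->
  exists x0, feas x0 /\ M = PI (act x0).
Proof. split.
  - intros [I [[x hx] ->]]. pose proof (M_I_act I x hx). subst I. exists x. split; [apply M_act_iff in hx; tauto|].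
    apply Mst_PI.
  - intros [x0 [hx0 ->]]. exists (act x0). split; [exists x0; apply M_act_iff; auto|]. symmetry; apply Mst_PI. Qed.

Lemma fin_S : exists L, forall M, (exists I, (exists x, M_I k m a alpha I x) /\ M = M_I k m a alpha I) <-> In M L.
Proof.
  destruct (finite_image (sublists (seq 1 m)) (fun s => exists x, M_I k m a alpha (fun i => In i s) x)
     (fun s => M_I k m a alpha (fun i => In i s))) as [L HL].
  exists L. intro M. rewrite HL. split.
  - intros [I [[x hx] ->]]. pose proof (M_I_act I x hx). subst I. rewrite act_actlist in *.
    exists (actlist x). split; [apply filter_sublists|]. split; eauto.
  - intros [s [_ [hs ->]]]. exists (fun i => In i s); split; auto. Qed.

Lemma fin_Sst : exists L, forall M, (exists I, (exists x, M_I k m a alpha I x) /\ M = Mst_I k m a I) <-> In M L.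
Proof.
  destruct (finite_image (sublists (seq 1 m)) (fun s => exists x, M_I k m a alpha (fun i => In i s) x)
     (fun s => Mst_I k m a (fun i => In i s))) as [L HL].
  exists L. intro M. rewrite HL. split.
  - intros [I [[x hx] ->]]. pose proof (M_I_act I x hx). subst I. rewrite act_actlist in *.
    exists (actlist x). split; [apply filter_sublists|]. split; eauto.
  - intros [s [_ [hs ->]]]. exists (fun i => In i s); split; auto. Qed.

Lemma x0_in_M x0 : feas x0 -> M_I k m a alpha (act x0) x0.
Proof. intro; apply M_act_iff; auto. Qed.

Lemma M_eq_act x0 x1 : feas x0 -> feas x1 -> M_I k m a alpha (act x0) = M_I k m a alpha (act x1) -> act x0 = act x1.
Proof. intros h0 h1 e. pose proof (x0_in_M x0 h0). rewrite e in H. apply M_act_iff in H; tauto. Qed.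

Lemma strat_primal : stratification (edom Rf) (fun M => exists I, (exists x, M_I k m a alpha I x) /\ M = M_I k m a alpha I).
Proof.
  split; [apply fin_S|]. split; [|split; [|split; [|split]]].
  - intros M hM. apply S_iff in hM as [x0 [hx0 ->]]. exists x0; apply x0_in_M; auto.
  - intros M hM x hx. apply S_iff in hM as [x0 [hx0 ->]]. apply M_act_iff in hx as [hx _]. apply edom_feas; auto.
  - intros x hx. apply edom_feas in hx. exists (M_I k m a alpha (act x)). split; [apply S_iff; eauto|apply x0_in_M; auto].
  - intros M M' hM hM' hne x [h1 h2]. apply S_iff in hM as [x0 [hx0 ->]]. apply S_iff in hM' as [x1 [hx1 ->]].
    apply M_act_iff in h1 as [_ e1]. apply M_act_iff in h2 as [_ e2]. apply hne. rewrite <- e1, <- e2. auto.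
  - intros M M' hM hM' [x [hx hcx]]. apply S_iff in hM as [x0 [hx0 ->]]. apply S_iff in hM' as [x1 [hx1 ->]].
    rewrite cl_M_eq in * by auto. apply M_act_iff in hx as [hx e]. destruct hcx as [_ hsub].
    intros y hy. apply M_act_iff in hy as [hy ey]. split; auto. rewrite ey, <- e. auto.
Qed.

Lemma PI_subdiff x0 g : feas x0 -> PI (act x0) g -> subdiff Rf x0 g.
Proof. intros h hg. rewrite subdiff_eq by auto. apply PI_DI; auto. Qed.

Lemma PI_conj_FI x0 g y : feas x0 -> PI (act x0) g -> FI (act x0) y -> subdiff Rf y g.
Proof. intros h hg hy. assert (subdiff (conjugate Rf) g y) by (rewrite (conj_PI_eq x0 g); auto).
  apply conj_subdiff_inv in H; tauto. Qed.

Lemma subdiff_PI_FI x0 g y : feas x0 -> PI (act x0) g -> feas y -> subdiff Rf y g -> FI (act x0) y.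
Proof. intros h hg hy hs. rewrite <- (conj_PI_eq x0 g) by auto. apply conj_subdiff; auto. Qed.

Lemma strat_dual : stratification (dom_subdiff (conjugate Rf)) (fun M => exists I, (exists x, M_I k m a alpha I x) /\ M = Mst_I k m a I).
Proof.
  split; [apply fin_Sst|]. split; [|split; [|split; [|split]]].
  - intros M hM. apply Sst_iff in hM as [x0 [hx0 ->]]. apply PI_nonempty.
  - intros M hM g hg. apply Sst_iff in hM as [x0 [hx0 ->]]. apply dom_subdiff_conj. exists x0. split; auto.
    apply PI_subdiff; auto.
  - intros g hg. apply dom_subdiff_conj in hg as [x [hx hs]]. destruct (dual_cover g x hx hs) as [z [hz hgz]].
    exists (PI (act z)). split; auto. apply Sst_iff; eauto.
  - intros M M' hM hM' hne g [h1 h2]. apply Sst_iff in hM as [x0 [hx0 ->]]. apply Sst_iff in hM' as [x1 [hx1 ->]].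
    apply hne. assert (e : FI (act x0) = FI (act x1)) by (rewrite <- (conj_PI_eq x0 g), <- (conj_PI_eq x1 g); auto).
    assert (e2 : act x0 = act x1).
    { apply M_eq_act; auto. rewrite <- !ri_FI_eq by auto. rewrite e. reflexivity. }
    rewrite e2; auto.
  - intros M M' hM hM' [g [hg hcg]]. apply Sst_iff in hM as [x0 [hx0 ->]]. apply Sst_iff in hM' as [x1 [hx1 ->]].
    rewrite cl_PI_eq in * by auto. rewrite <- subdiff_eq in * by auto.
    assert (hF : FI (act x0) x1) by (apply (subdiff_PI_FI x0 g); auto).
    intros h hh. apply (PI_conj_FI x0 h x1); auto.
Qed.

Lemma main_thm :
  let Rf0 := polyR k m a alpha in
  let S := fun M : vset N => exists I, (exists x, M_I k m a alpha I x) /\ M = M_I k m a alpha I in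
  let Sst := fun M : vset N => exists I, (exists x, M_I k m a alpha I x) /\ M = Mst_I k m a I in
  stratification (edom Rf0) S /\
  (forall I, (exists x, M_I k m a alpha I x) ->
     Jmap Rf0 (M_I k m a alpha I) = Mst_I k m a I /\
     Jmap (conjugate Rf0) (Mst_I k m a I) = M_I k m a alpha I) /\
  mirror_stratifiable Rf0 S Sst.
Proof.
  intros Rf0 S Sst. change Rf0 with Rf. subst Rf0.
  split; [apply strat_primal|]. split.
  - intros I [x hx]. pose proof (M_I_act I x hx). subst I. apply M_act_iff in hx as [hx _].
    rewrite Mst_PI. split; [apply Jmap_M|apply Jmap_PI]; auto.
  - split; [rewrite dom_subdiff_Rf; apply strat_primal|]. split; [apply strat_dual|].
    split; [|split; [|split]].
    + intros M hM. apply S_iff in hM as [x0 [hx0 ->]]. rewrite Jmap_M by auto. apply Sst_iff; eauto.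
    + intros M hM. apply Sst_iff in hM as [x0 [hx0 ->]]. rewrite Jmap_PI by auto. apply S_iff; eauto.
    + intros M Mst hM hMst. apply S_iff in hM as [x0 [hx0 ->]]. apply Sst_iff in hMst as [x1 [hx1 ->]].
      rewrite Jmap_M, Jmap_PI by auto. split.
      * intro e. rewrite <- (Jmap_PI x1) by auto. rewrite e. apply Jmap_PI; auto.
      * intro e. f_equal. apply M_eq_act; auto.
    + intros M M' hM hM'. apply S_iff in hM as [x0 [hx0 ->]]. apply S_iff in hM' as [x1 [hx1 ->]].
      rewrite !Jmap_M by auto. unfold strat_le. rewrite cl_M_eq, cl_PI_eq by auto. split.
      * intros h g hg. rewrite <- subdiff_eq by auto.
        assert (hF : FI (act x1) x0) by (apply h; apply x0_in_M; auto).
        apply (PI_conj_FI x1 g x0); auto.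
      * intros h x hx. destruct (PI_nonempty x1) as [g hg]. specialize (h g hg).
        rewrite <- subdiff_eq in h by auto. pose proof (subdiff_PI_FI x1 g x0 hx1 hg hx0 h) as [_ hsub].
        apply M_act_iff in hx as [hx ex]. split; auto. rewrite ex; auto.
Qed.

End Poly.

Theorem proposition2p2 (N k m : nat) (a : nat -> vec N) (alpha : nat -> R)
  (Hk : (1 <= k <= m)%nat)
  (Hdom : exists x, edom (polyR k m a alpha) x) :
  let Rf := polyR k m a alpha in
  let S := fun M : vset N => exists I, (exists x, M_I k m a alpha I x) /\ M = M_I k m a alpha I in
  let Sst := fun M : vset N => exists I, (exists x, M_I k m a alpha I x) /\ M = Mst_I k m a I in
  stratification (edom Rf) S /\
  (forall I, (exists x, M_I k m a alpha I x) ->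
     Jmap Rf (M_I k m a alpha I) = Mst_I k m a I /\
     Jmap (conjugate Rf) (Mst_I k m a I) = M_I k m a alpha I) /\
  mirror_stratifiable Rf S Sst.
Proof.
  apply (main_thm N k m a alpha Hk).
  destruct Hdom as [x hx]. exists x. apply (edom_feas N k m a alpha Hk x); auto.
Qed.
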